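(* Let $X$ be a complex Banach space and let $\mathcal{D}=\{X_n:n\ge1\}$ be an $R$-Schauder decomposition of $X$. Then: (a) every sectorial operator $A$ on $X$ which is a $\mathcal{D}$-multiplier is $R$-sectorial of $R$-type $0$ (i.e. of $R$-type $\omega$ for every $\omega\in(0,\pi)$); (b) every Ritt operator $T\in B(X)$ which is a $\mathcal{D}$-multiplier is $R$-Ritt.
   Context: $R$-boundedness: with $(\varepsilon_j)$ independent Rademacher variables on $(\Omega,\mathbb{P})$ and $\|\sum_{j=1}^k\varepsilon_j\otimes x_j\|_{R,X}=\int_\Omega\|\sum_j\varepsilon_j(u)x_j\|\,d\mathbb{P}(u)$, a set $F\subset B(X)$ is $R$-bounded if there is $K$ with $\|\sum_j\varepsilon_j\otimes T_j x_j\|_{R,X}\le K\|\sum_j\varepsilon_j\otimes x_j\|_{R,X}$ for all finite families $T_j\in F$, $x_j\in X$. $\Sigma_\omega=\{\lambda\ne0:|\mathrm{Arg}\lambda|<\omega\}$. A closed densely defined $A$ is sectorial of type $\omega\in(0,\pi)$ if $\sigma(A)\subset\overline{\Sigma_\omega}$ and for each $\theta\in(\omega,\pi)$ the set $\{\lambda(\lambda I_X-A)^{-1}:\lambda\in\mathbb{C}\setminus\overline{\Sigma_\theta}\}$ is bounded; $R$-sectorial of $R$-type $\omega$ if moreover these sets are $R$-bounded; ($R$-)type $0$ means ($R$-)type $\omega$ for all $\omega\in(0,\pi)$. $T\in B(X)$ is a Ritt operator if $\{T^n:n\ge0\}$ and $\{nT^n(I_X-T):n\ge1\}$ are bounded,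 and $R$-Ritt if both sets are $R$-bounded. A Schauder decomposition of $X$ is a sequence $\mathcal{D}=\{X_n:n\ge1\}$ of closed subspaces such that every $x\in X$ has a unique expansion $x=\sum_{n\ge1}x_n$ with $x_n\in X_n$; $p_n(x)=x_n$ and $P_N=\sum_{n=1}^Np_n$ (the set $\{P_N:N\ge1\}$ is then bounded). $\mathcal{D}$ is $R$-Schauder if $\{P_N:N\ge1\}$ is $R$-bounded. A sectorial $\mathcal{D}$-multiplier is an operator $A$ of the form: for a nondecreasing sequence $(a_n)_{n\ge1}$ in $(0,\infty)$, $D(A)=\{x\in X:\sum_n a_np_n(x)\text{ converges}\}$ and $Ax=\sum_{n\ge1}a_np_n(x)$ (such $A$ is sectorial of type $0$). A Ritt $\mathcal{D}$-multiplier is an operator $T(x)=\sum_{n\ge1}c_np_n(x)$ with $(c_n)_{n\ge1}$ a nondecreasing sequence in $(0,1)$. *)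

(* Defs.v *)
From Stdlib Require Import Reals List.
Import ListNotations.
Open Scope R_scope.

Definition C := (R * R)%type.
Definition RtoC (r : R) : C := (r, 0).
Definition C1 : C := RtoC 1.
Definition Cadd (a b : C) : C := (fst a + fst b, snd a + snd b).
Definition Cminus (a b : C) : C := (fst a - fst b, snd a - snd b).
Definition Cmul (a b : C) : C :=
  (fst a * fst b - snd a * snd b, fst a * snd b + snd a * fst b).
Definition Cmod (a : C) : R := sqrt (fst a ^ 2 + snd a ^ 2).

Record CBanach := mkCBanach {
  vcar :> Type;
  vzero : vcar;
  vadd : vcar -> vcar -> vcar;
  vopp : vcar -> vcar;
  vscal : C -> vcar -> vcar;
  vnorm : vcar -> R;
  vadd_assoc : forall x y z, vadd x (vadd y z) = vadd (vadd x y) z;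
  vadd_comm : forall x y, vadd x y = vadd y x;
  vadd_0 : forall x, vadd x vzero = x;
  vadd_opp : forall x, vadd x (vopp x) = vzero;
  vscal_assoc : forall a b x, vscal a (vscal b x) = vscal (Cmul a b) x;
  vscal_1 : forall x, vscal C1 x = x;
  vscal_distr_v : forall a x y, vscal a (vadd x y) = vadd (vscal a x) (vscal a y);
  vscal_distr_s : forall a b x, vscal (Cadd a b) x = vadd (vscal a x) (vscal b x);
  vnorm_nonneg : forall x, 0 <= vnorm x;
  vnorm_eq0 : forall x, vnorm x = 0 -> x = vzero;
  vnorm_scal : forall a x, vnorm (vscal a x) = Cmod a * vnorm x;
  vnorm_triangle : forall x y, vnorm (vadd x y) <= vnorm x + vnorm y;
  vcomplete : forall u : nat -> vcar,
    (forall eps, 0 < eps -> exists N, forall m n, (N <= m)%nat -> (N <= n)%nat ->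
        vnorm (vadd (u m) (vopp (u n))) < eps) ->
    exists l, forall eps, 0 < eps -> exists N, forall n, (N <= n)%nat ->
        vnorm (vadd (u n) (vopp l)) < eps
}.

Arguments vzero {c}.
Arguments vadd {c}.
Arguments vopp {c}.
Arguments vscal {c}.
Arguments vnorm {c}.

Definition vsub {X : CBanach} (x y : X) : X := vadd x (vopp y).

Definition conv {X : CBanach} (u : nat -> X) (l : X) : Prop :=
  forall eps, 0 < eps -> exists N, forall n, (N <= n)%nat -> vnorm (vsub (u n) l) < eps.

Fixpoint psum {X : CBanach} (f : nat -> X) (N : nat) : X :=
  match N with
  | O => vzero
  | S N' => vadd (psum f N') (f N')
  end.

(** * Rademacher averages:
   || sum_j eps_j (x) x_j ||_{R,X} = E || sum_j eps_j x_j || = 2^{-k} sum over all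
   sign choices (exactly the integral over (Omega,P) for independent Rademachers). *)
Fixpoint all_signs (k : nat) : list (list bool) :=
  match k with
  | O => [[]]
  | S k' => map (cons true) (all_signs k') ++ map (cons false) (all_signs k')
  end.

Definition sgn (b : bool) : C := if b then RtoC 1 else RtoC (-1).

Fixpoint signed_sum {X : CBanach} (s : list bool) (xs : list X) : X :=
  match s, xs with
  | b :: s', x :: xs' => vadd (vscal (sgn b) x) (signed_sum s' xs')
  | _, _ => vzero
  end.

Definition rad_norm {X : CBanach} (xs : list X) : R :=
  / (2 ^ length xs) *
  fold_right Rplus 0 (map (fun s => vnorm (signed_sum s xs)) (all_signs (length xs))).

Definition R_bounded {X : CBanach} (F : (X -> X) -> Prop) : Prop :=
  exists K, forall ts : list ((X -> X) * X),
    (forall q, In q ts -> F (fst q)) ->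
    rad_norm (map (fun q => fst q (snd q)) ts) <= K * rad_norm (map snd ts).

Definition bounded_set {X : CBanach} (F : (X -> X) -> Prop) : Prop :=
  exists M, forall S, F S -> forall x, vnorm (S x) <= M * vnorm x.

Definition linear_op {X : CBanach} (T : X -> X) : Prop :=
  (forall x y, T (vadd x y) = vadd (T x) (T y)) /\
  (forall a x, T (vscal a x) = vscal a (T x)).

Definition bounded_op {X : CBanach} (T : X -> X) : Prop :=
  linear_op T /\ exists M, forall x, vnorm (T x) <= M * vnorm x.

Definition subspace {X : CBanach} (M : X -> Prop) : Prop :=
  M vzero /\ (forall x y, M x -> M y -> M (vadd x y)) /\
  (forall a x, M x -> M (vscal a x)).

Definition closed_set {X : CBanach} (M : X -> Prop) : Prop :=
  forall (u : nat -> X) l, (forall n, M (u n)) -> conv u l -> M l.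

(** D = {X_n} (indexed from 0 here) is a Schauder decomposition with
    coordinate projections p_n : every x has the unique expansion
    x = sum_n x_n, x_n in X_n, and p n x = x_n. *)
Definition Schauder {X : CBanach} (Xs : nat -> X -> Prop) (p : nat -> X -> X) : Prop :=
  (forall n, subspace (Xs n) /\ closed_set (Xs n)) /\
  (forall n x, Xs n (p n x)) /\
  (forall x, conv (psum (fun n => p n x)) x) /\
  (forall x (y : nat -> X), (forall n, Xs n (y n)) -> conv (psum y) x ->
       forall n, y n = p n x).

Definition partial_projs {X : CBanach} (p : nat -> X -> X) (S : X -> X) : Prop :=
  exists N, (1 <= N)%nat /\ forall x, S x = psum (fun n => p n x) N.

Definition R_Schauder {X : CBanach} (Xs : nat -> X -> Prop) (p : nat -> X -> X) : Prop :=
  Schauder Xs p /\ R_bounded (partial_projs p).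

(** Sigma_w = { lam <> 0 : |Arg lam| < w }, Arg the principal argument in (-pi, pi] *)
Definition sector (w : R) (lam : C) : Prop :=
  exists r phi, 0 < r /\ - PI < phi <= PI /\ Rabs phi < w /\
    lam = (r * cos phi, r * sin phi).

Definition csector (w : R) (lam : C) : Prop :=
  forall eps, 0 < eps -> exists mu, sector w mu /\ Cmod (Cminus lam mu) < eps.

(** * (Unbounded) operators: A with domain DA *)
Definition closed_densely_defined {X : CBanach} (DA : X -> Prop) (A : X -> X) : Prop :=
  subspace DA /\
  (forall x y, DA x -> DA y -> A (vadd x y) = vadd (A x) (A y)) /\
  (forall a x, DA x -> A (vscal a x) = vscal a (A x)) /\
  (forall (u : nat -> X) x y, (forall n, DA (u n)) -> conv u x ->
       conv (fun n => A (u n)) y -> DA x /\ A x = y) /\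
  (forall x eps, 0 < eps -> exists z, DA z /\ vnorm (vsub x z) < eps).

Definition resolvent_op {X : CBanach} (DA : X -> Prop) (A : X -> X) (lam : C)
    (R : X -> X) : Prop :=
  bounded_op R /\
  (forall x, DA (R x) /\ vsub (vscal lam (R x)) (A (R x)) = x) /\
  (forall z, DA z -> R (vsub (vscal lam z) (A z)) = z).

Definition in_resolvent_set {X : CBanach} (DA : X -> Prop) (A : X -> X) (lam : C) : Prop :=
  exists R, resolvent_op DA A lam R.

Definition sect_res_set {X : CBanach} (DA : X -> Prop) (A : X -> X) (theta : R)
    (S : X -> X) : Prop :=
  exists lam R, ~ csector theta lam /\ resolvent_op DA A lam R /\
    forall x, S x = vscal lam (R x).

Definition sectorial {X : CBanach} (w : R) (DA : X -> Prop) (A : X -> X) : Prop :=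
  closed_densely_defined DA A /\
  (forall lam, ~ csector w lam -> in_resolvent_set DA A lam) /\
  (forall theta, w < theta < PI -> bounded_set (sect_res_set DA A theta)).

Definition R_sectorial {X : CBanach} (w : R) (DA : X -> Prop) (A : X -> X) : Prop :=
  sectorial w DA A /\
  (forall theta, w < theta < PI -> R_bounded (sect_res_set DA A theta)).

Definition R_sectorial_type0 {X : CBanach} (DA : X -> Prop) (A : X -> X) : Prop :=
  forall w, 0 < w < PI -> R_sectorial w DA A.

Definition sect_multiplier {X : CBanach} (Xs : nat -> X -> Prop) (p : nat -> X -> X)
    (DA : X -> Prop) (A : X -> X) : Prop :=
  exists a : nat -> R,
    (forall n, 0 < a n) /\ (forall n, a n <= a (S n)) /\
    (forall x, DA x <-> exists l, conv (psum (fun n => vscal (RtoC (a n)) (p n x))) l) /\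
    (forall x, DA x -> conv (psum (fun n => vscal (RtoC (a n)) (p n x))) (A x)).

Definition powers {X : CBanach} (T : X -> X) (S : X -> X) : Prop :=
  exists n, forall x, S x = Nat.iter n T x.

Definition ritt_set {X : CBanach} (T : X -> X) (U : X -> X) : Prop :=
  exists n, (1 <= n)%nat /\
    forall x, U x = vscal (RtoC (INR n)) (vsub (Nat.iter n T x) (Nat.iter (S n) T x)).

Definition Ritt {X : CBanach} (T : X -> X) : Prop :=
  bounded_op T /\ bounded_set (powers T) /\ bounded_set (ritt_set T).

Definition R_Ritt {X : CBanach} (T : X -> X) : Prop :=
  bounded_op T /\ R_bounded (powers T) /\ R_bounded (ritt_set T).

Definition Ritt_multiplier {X : CBanach} (Xs : nat -> X -> Prop) (p : nat -> X -> X)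
    (T : X -> X) : Prop :=
  exists c : nat -> R,
    (forall n, 0 < c n < 1) /\ (forall n, c n <= c (S n)) /\
    (forall x, conv (psum (fun n => vscal (RtoC (c n)) (p n x))) (T x)).

(* Main.v *)
Require Import Defs.
From Stdlib Require Import Reals List.
From Stdlib Require Import Lra Lia Psatz ClassicalEpsilon Classical.
From Coquelicot Require Complex.
Import ListNotations.
Open Scope R_scope.

Ltac ceq := repeat match goal with c : Defs.C |- _ => destruct c end;
  unfold Cmul, Cadd, Cminus, RtoC, C1 in *; simpl; f_equal; ring.


Lemma vadd_0l {X : CBanach} (x : X) : vadd vzero x = x.
Proof. rewrite vadd_comm; apply vadd_0. Qed.

Lemma vadd_oppl {X : CBanach} (x : X) : vadd (vopp x) x = vzero.
Proof. rewrite vadd_comm; apply vadd_opp. Qed.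

Lemma vadd_cancel_l {X : CBanach} (a x y : X) : vadd a x = vadd a y -> x = y.
Proof.
  intros H. rewrite <- (vadd_0l x), <- (vadd_0l y), <- (vadd_oppl a).
  rewrite <- !vadd_assoc, H; reflexivity.
Qed.

Lemma vopp_unique {X : CBanach} (x y : X) : vadd x y = vzero -> y = vopp x.
Proof. intros H. apply (vadd_cancel_l x). now rewrite H, vadd_opp. Qed.

Lemma vopp_opp {X : CBanach} (x : X) : vopp (vopp x) = x.
Proof. symmetry. apply vopp_unique. apply vadd_oppl. Qed.

Lemma vadd_swap {X : CBanach} (a b c : X) : vadd a (vadd b c) = vadd b (vadd a c).
Proof. rewrite !vadd_assoc, (vadd_comm _ a b); reflexivity. Qed.

Lemma vadd_4 {X : CBanach} (a b c d : X) :
  vadd (vadd a b) (vadd c d) = vadd (vadd a c) (vadd b d).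
Proof. rewrite <- !vadd_assoc. f_equal. apply vadd_swap. Qed.

Lemma vopp_add {X : CBanach} (x y : X) : vopp (vadd x y) = vadd (vopp x) (vopp y).
Proof.
  symmetry; apply vopp_unique.
  rewrite vadd_4, !vadd_opp, vadd_0; reflexivity.
Qed.

Lemma vopp_zero {X : CBanach} : vopp (@vzero X) = vzero.
Proof. symmetry; apply vopp_unique; apply vadd_0. Qed.

Lemma vadd_idem_zero {X : CBanach} (x : X) : vadd x x = x -> x = vzero.
Proof. intros H. rewrite <- (vadd_0 _ x) in H at 3. now apply vadd_cancel_l in H. Qed.

Lemma vscal_zero_v {X : CBanach} a : vscal a (@vzero X) = vzero.
Proof. apply vadd_idem_zero. rewrite <- vscal_distr_v, vadd_0; reflexivity. Qed.

Lemma vscal_eqC {X : CBanach} a b (x : X) : a = b -> vscal a x = vscal b x.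
Proof. intros ->; reflexivity. Qed.

Lemma vscal_0 {X : CBanach} (x : X) : vscal (RtoC 0) x = vzero.
Proof. apply vadd_idem_zero. rewrite <- vscal_distr_s. apply vscal_eqC; ceq. Qed.

Lemma vscal_opp_v {X : CBanach} a (x : X) : vscal a (vopp x) = vopp (vscal a x).
Proof. apply vopp_unique. rewrite <- vscal_distr_v, vadd_opp. apply vscal_zero_v. Qed.

Lemma vscal_m1 {X : CBanach} (x : X) : vscal (RtoC (-1)) x = vopp x.
Proof.
  apply vopp_unique. rewrite <- (vscal_1 _ x) at 1. rewrite <- vscal_distr_s.
  rewrite <- (vscal_0 x). apply vscal_eqC; ceq.
Qed.

Lemma vscal_mul {X : CBanach} a b (x : X) : vscal a (vscal b x) = vscal (Cmul a b) x.
Proof. apply vscal_assoc. Qed.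

Lemma rs_mul {X : CBanach} a b (x : X) :
  vscal (RtoC a) (vscal (RtoC b) x) = vscal (RtoC (a * b)) x.
Proof. rewrite vscal_assoc. apply vscal_eqC; ceq. Qed.

Lemma rs_add {X : CBanach} a b (x : X) :
  vscal (RtoC (a + b)) x = vadd (vscal (RtoC a) x) (vscal (RtoC b) x).
Proof. rewrite <- vscal_distr_s. apply vscal_eqC; ceq. Qed.

Lemma rs_1 {X : CBanach} (x : X) : vscal (RtoC 1) x = x.
Proof. apply vscal_1. Qed.

Lemma rs_opp {X : CBanach} a (x : X) : vscal (RtoC (- a)) x = vopp (vscal (RtoC a) x).
Proof.
  rewrite <- vscal_m1, rs_mul. apply vscal_eqC; ceq.
Qed.

Lemma vscal_opp_s {X : CBanach} a (x : X) : vscal a (vopp x) = vscal (Cmul (RtoC (-1)) a) x.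
Proof. rewrite <- vscal_m1, vscal_assoc. apply vscal_eqC; ceq. Qed.

Lemma Cmod_RtoC r : Cmod (RtoC r) = Rabs r.
Proof. apply Complex.Cmod_R. Qed.

Lemma Cmod_nonneg a : 0 <= Cmod a.
Proof. apply Complex.Cmod_ge_0. Qed.

Lemma vnorm_zero {X : CBanach} : vnorm (@vzero X) = 0.
Proof. rewrite <- (vscal_0 vzero), vnorm_scal, Cmod_RtoC, Rabs_R0; ring. Qed.

Lemma vnorm_opp {X : CBanach} (x : X) : vnorm (vopp x) = vnorm x.
Proof. rewrite <- vscal_m1, vnorm_scal, Cmod_RtoC. replace (Rabs (-1)) with 1 by (unfold Rabs; destruct Rcase_abs; lra); ring. Qed.

Lemma vsub_opp {X : CBanach} (x y : X) : vopp (vsub x y) = vsub y x.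
Proof. unfold vsub. rewrite vopp_add, vopp_opp, vadd_comm; reflexivity. Qed.

Lemma vnorm_sub_sym {X : CBanach} (x y : X) : vnorm (vsub x y) = vnorm (vsub y x).
Proof. rewrite <- vsub_opp, vnorm_opp; reflexivity. Qed.

Lemma vsub_eq0 {X : CBanach} (x y : X) : vsub x y = vzero -> x = y.
Proof.
  unfold vsub; intros H. apply vopp_unique in H. rewrite <- (vopp_opp x), <- H, vopp_opp; reflexivity.
Qed.

Lemma vsub_diag {X : CBanach} (x : X) : vsub x x = vzero.
Proof. apply vadd_opp. Qed.

Lemma vsub_triangle {X : CBanach} (x y z : X) :
  vnorm (vsub x z) <= vnorm (vsub x y) + vnorm (vsub y z).
Proof.
  replace (vsub x z) with (vadd (vsub x y) (vsub y z)). apply vnorm_triangle.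
  unfold vsub. rewrite <- vadd_assoc, (vadd_assoc _ (vopp y)), vadd_oppl, vadd_0l; reflexivity.
Qed.

Lemma vnorm_triangle_sub {X : CBanach} (x y : X) : vnorm x <= vnorm y + vnorm (vsub x y).
Proof.
  replace x with (vadd y (vsub x y)) at 1. apply vnorm_triangle.
  unfold vsub. rewrite vadd_swap, vadd_opp, vadd_0; reflexivity.
Qed.

Lemma vsub_add_add {X : CBanach} (a b c d : X) :
  vsub (vadd a b) (vadd c d) = vadd (vsub a c) (vsub b d).
Proof. unfold vsub. rewrite vopp_add, vadd_4; reflexivity. Qed.

Lemma vsub_scal {X : CBanach} a (x y : X) : vsub (vscal a x) (vscal a y) = vscal a (vsub x y).
Proof. unfold vsub. rewrite vscal_distr_v, vscal_opp_v; reflexivity. Qed.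

Lemma vnorm_eq0_iff {X : CBanach} (x y : X) : vnorm (vsub x y) = 0 -> x = y.
Proof. intros H; apply vsub_eq0, vnorm_eq0, H. Qed.

Fixpoint sumR (f : nat -> R) (N : nat) : R :=
  match N with O => 0 | S n => sumR f n + f n end.

Lemma sumR_ext f g N : (forall k, (k < N)%nat -> f k = g k) -> sumR f N = sumR g N.
Proof. induction N; simpl; intros H; auto. rewrite IHN by (intros; apply H; lia). rewrite H by lia; auto. Qed.

Lemma sumR_nonneg f N : (forall k, 0 <= f k) -> 0 <= sumR f N.
Proof. intros H; induction N; simpl; [lra| specialize (H N); lra]. Qed.

Lemma sumR_mono f N M : (forall k, 0 <= f k) -> (N <= M)%nat -> sumR f N <= sumR f M.
Proof. intros H Hle; induction Hle; simpl; [lra| specialize (H m); lra]. Qed.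

Lemma sumR_le f g N : (forall k, f k <= g k) -> sumR f N <= sumR g N.
Proof. intros H; induction N; simpl; [lra| specialize (H N); lra]. Qed.

Lemma sumR_telescope (u : nat -> R) N : sumR (fun k => u (S k) - u k) N = u N - u O.
Proof. induction N; simpl; [ring| rewrite IHN; ring]. Qed.

Lemma sumR_scal c f N : sumR (fun k => c * f k) N = c * sumR f N.
Proof. induction N; simpl; [ring | rewrite IHN; ring]. Qed.

Lemma psum_ext {X : CBanach} (f g : nat -> X) N :
  (forall k, (k < N)%nat -> f k = g k) -> psum f N = psum g N.
Proof. induction N; simpl; intros H; auto. rewrite IHN by (intros; apply H; lia). rewrite H by lia; auto. Qed.

Lemma psum_add {X : CBanach} (f g : nat -> X) N :
  psum (fun n => vadd (f n) (g n)) N = vadd (psum f N) (psum g N).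
Proof. induction N; simpl. rewrite vadd_0; auto. rewrite IHN, vadd_4; auto. Qed.

Lemma psum_scal {X : CBanach} a (f : nat -> X) N :
  psum (fun n => vscal a (f n)) N = vscal a (psum f N).
Proof. induction N; simpl. rewrite vscal_zero_v; auto. rewrite IHN, vscal_distr_v; auto. Qed.

Lemma psum_opp {X : CBanach} (f : nat -> X) N :
  psum (fun n => vopp (f n)) N = vopp (psum f N).
Proof. induction N; simpl. rewrite vopp_zero; auto. rewrite IHN, vopp_add; auto. Qed.

Lemma psum_sub {X : CBanach} (f g : nat -> X) N :
  psum (fun n => vsub (f n) (g n)) N = vsub (psum f N) (psum g N).
Proof. unfold vsub. rewrite psum_add, psum_opp; auto. Qed.

Lemma psum_zero {X : CBanach} N : psum (fun _ => @vzero X) N = vzero.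
Proof. induction N; simpl; auto. rewrite IHN, vadd_0; auto. Qed.

Lemma psum_trunc {X : CBanach} (f g : nat -> X) m n :
  (forall k, g k = if Nat.ltb k m then f k else vzero) -> (m <= n)%nat ->
  psum g n = psum f m.
Proof.
  intros Hg Hle. induction Hle.
  - apply psum_ext. intros k Hk. rewrite Hg. destruct (Nat.ltb_spec k m); [auto| lia].
  - simpl. rewrite IHHle, Hg. destruct (Nat.ltb_spec m0 m); [lia| apply vadd_0].
Qed.

Definition additive {X : CBanach} (T : X -> X) := forall x y, T (vadd x y) = vadd (T x) (T y).

Lemma additive_zero {X : CBanach} (T : X -> X) : additive T -> T vzero = vzero.
Proof. intros H. apply vadd_idem_zero. rewrite <- H, vadd_0; auto. Qed.

Lemma psum_map {X : CBanach} (T : X -> X) f N : additive T -> T (psum f N) = psum (fun n => T (f n)) N.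
Proof. intros H; induction N; simpl. apply additive_zero, H. rewrite H, IHN; auto. Qed.

Lemma vnorm_psum {X : CBanach} (f : nat -> X) N : vnorm (psum f N) <= sumR (fun k => vnorm (f k)) N.
Proof.
  induction N; simpl. rewrite vnorm_zero; lra.
  eapply Rle_trans. apply vnorm_triangle. lra.
Qed.

Lemma conv_unique {X : CBanach} (u : nat -> X) l1 l2 : conv u l1 -> conv u l2 -> l1 = l2.
Proof.
  intros H1 H2. apply vnorm_eq0_iff.
  destruct (Rle_lt_or_eq_dec 0 (vnorm (vsub l1 l2)) (vnorm_nonneg _ _)) as [Hp|Hz]; [|symmetry; exact Hz].
  exfalso. set (e := vnorm (vsub l1 l2)) in *.
  destruct (H1 (e/2)) as [N1 HN1]; [lra|]. destruct (H2 (e/2)) as [N2 HN2]; [lra|].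
  specialize (HN1 (N1+N2)%nat ltac:(lia)). specialize (HN2 (N1+N2)%nat ltac:(lia)).
  pose proof (vsub_triangle l1 (u (N1+N2)%nat) l2). rewrite (vnorm_sub_sym l1 (u _)) in H. unfold e in *. lra.
Qed.

Lemma conv_ext {X : CBanach} (u v : nat -> X) l : (forall n, u n = v n) -> conv u l -> conv v l.
Proof. intros He H eps Heps. destruct (H eps Heps) as [N HN]. exists N; intros n Hn. rewrite <- He; auto. Qed.

Lemma conv_eventually {X : CBanach} (u : nat -> X) l N0 : (forall n, (N0 <= n)%nat -> u n = l) -> conv u l.
Proof. intros H eps Heps. exists N0. intros n Hn. rewrite H, vsub_diag, vnorm_zero; auto. Qed.

Lemma conv_add {X : CBanach} (u v : nat -> X) l1 l2 :
  conv u l1 -> conv v l2 -> conv (fun n => vadd (u n) (v n)) (vadd l1 l2).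
Proof.
  intros H1 H2 eps Heps.
  destruct (H1 (eps/2)) as [N1 HN1]; [lra|]. destruct (H2 (eps/2)) as [N2 HN2]; [lra|].
  exists (N1+N2)%nat. intros n Hn. rewrite vsub_add_add.
  eapply Rle_lt_trans. apply vnorm_triangle.
  specialize (HN1 n ltac:(lia)). specialize (HN2 n ltac:(lia)). lra.
Qed.

Lemma conv_scal {X : CBanach} a (u : nat -> X) l :
  conv u l -> conv (fun n => vscal a (u n)) (vscal a l).
Proof.
  intros H eps Heps.
  destruct (H (eps / (Cmod a + 1))) as [N HN].
  { apply Rdiv_lt_0_compat; [lra| pose proof (Cmod_nonneg a); lra]. }
  exists N. intros n Hn. rewrite vsub_scal, vnorm_scal.
  specialize (HN n Hn). pose proof (Cmod_nonneg a).
  apply Rle_lt_trans with (Cmod a * (eps / (Cmod a + 1))).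
  apply Rmult_le_compat_l; lra.
  apply Rlt_le_trans with ((Cmod a + 1) * (eps / (Cmod a + 1))).
  apply Rmult_lt_compat_r; [apply Rdiv_lt_0_compat; lra| lra].
  right; field; lra.
Qed.

Lemma conv_opp {X : CBanach} (u : nat -> X) l : conv u l -> conv (fun n => vopp (u n)) (vopp l).
Proof.
  intros H. apply conv_ext with (fun n => vscal (RtoC (-1)) (u n)).
  intros; apply vscal_m1. rewrite <- vscal_m1. apply conv_scal, H.
Qed.

Lemma conv_sub {X : CBanach} (u v : nat -> X) l1 l2 :
  conv u l1 -> conv v l2 -> conv (fun n => vsub (u n) (v n)) (vsub l1 l2).
Proof. intros; apply conv_add; auto. apply conv_opp; auto. Qed.

Lemma conv_op {X : CBanach} (T : X -> X) M (u : nat -> X) l :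
  additive T -> (forall x, vnorm (T x) <= M * vnorm x) -> conv u l -> conv (fun n => T (u n)) (T l).
Proof.
  intros Ha Hb H eps Heps.
  assert (HT : forall x y, T (vsub x y) = vsub (T x) (T y)).
  { intros x y. unfold vsub. apply (vadd_cancel_l (T y)).
    rewrite <- Ha, vadd_swap, vadd_opp, vadd_0, vadd_swap, vadd_opp, vadd_0; auto. }
  destruct (H (eps / (Rabs M + 1))) as [N HN].
  { apply Rdiv_lt_0_compat; [lra| pose proof (Rabs_pos M); lra]. }
  exists N. intros n Hn. rewrite <- HT. eapply Rle_lt_trans. apply Hb.
  specialize (HN n Hn). pose proof (Rabs_pos M). pose proof (vnorm_nonneg _ (vsub (u n) l)).
  apply Rle_lt_trans with (Rabs M * vnorm (vsub (u n) l)).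
  apply Rmult_le_compat_r; [auto| apply Rle_abs].
  apply Rle_lt_trans with (Rabs M * (eps / (Rabs M + 1))).
  apply Rmult_le_compat_l; lra.
  apply Rlt_le_trans with ((Rabs M + 1) * (eps / (Rabs M + 1))).
  apply Rmult_lt_compat_r; [apply Rdiv_lt_0_compat; lra| lra].
  right; field; lra.
Qed.

Lemma conv_le {X : CBanach} (u : nat -> X) l B : conv u l -> (forall n, vnorm (u n) <= B) -> vnorm l <= B.
Proof.
  intros H Hb. apply Rnot_lt_le; intros Hlt.
  destruct (H (vnorm l - B)) as [N HN]; [lra|].
  specialize (HN N (le_n _)). specialize (Hb N).
  pose proof (vnorm_triangle_sub l (u N)). rewrite vnorm_sub_sym in H0. lra.
Qed.

Lemma vsub_vadd_sub {X : CBanach} (a b c : X) : vsub (vadd a b) (vadd a c) = vsub b c.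
Proof.
  unfold vsub. rewrite vopp_add, vadd_4, vadd_opp, vadd_0l; auto.
Qed.

Definition PP {X : CBanach} (p : nat -> X -> X) (N : nat) (x : X) : X := psum (fun n => p n x) N.

Definition Emul {X : CBanach} (p : nat -> X -> X) (m : nat -> Defs.C) (x : X) (N : nat) : X :=
  psum (fun k => vscal (m k) (p k x)) N.

Section S. End S.

Lemma sch_sub {X : CBanach} Xs (p : nat -> X -> X) : Schauder Xs p -> forall n, subspace (Xs n).
Proof. intros [H _] n; apply H. Qed.

Lemma sch_in {X : CBanach} Xs (p : nat -> X -> X) : Schauder Xs p -> forall n x, Xs n (p n x).
Proof. intros [_ [H _]]; apply H. Qed.

Lemma sch_conv {X : CBanach} Xs (p : nat -> X -> X) : Schauder Xs p -> forall x, conv (psum (fun n => p n x)) x.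
Proof. intros [_ [_ [H _]]]; apply H. Qed.

Lemma sch_uniq {X : CBanach} Xs (p : nat -> X -> X) : Schauder Xs p ->
  forall x (y : nat -> X), (forall n, Xs n (y n)) -> conv (psum y) x -> forall n, y n = p n x.
Proof. intros [_ [_ [_ H]]]; apply H. Qed.

Lemma p_add {X : CBanach} Xs (p : nat -> X -> X) : Schauder Xs p ->
  forall n x y, p n (vadd x y) = vadd (p n x) (p n y).
Proof.
  intros Hs n x y. symmetry. apply (sch_uniq _ _ Hs (vadd x y) (fun n => vadd (p n x) (p n y))).
  - intros k. destruct (sch_sub _ _ Hs k) as [_ [Ha _]]. apply Ha; eapply sch_in; eauto.
  - eapply conv_ext. intros; symmetry; apply psum_add. apply conv_add; eapply sch_conv; eauto.
Qed.

Lemma p_scal {X : CBanach} Xs (p : nat -> X -> X) : Schauder Xs p ->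
  forall n a x, p n (vscal a x) = vscal a (p n x).
Proof.
  intros Hs n a x. symmetry. apply (sch_uniq _ _ Hs (vscal a x) (fun n => vscal a (p n x))).
  - intros k. destruct (sch_sub _ _ Hs k) as [_ [_ Ha]]. apply Ha; eapply sch_in; eauto.
  - eapply conv_ext. intros; symmetry; apply psum_scal. apply conv_scal; eapply sch_conv; eauto.
Qed.

Lemma p_additive {X : CBanach} Xs (p : nat -> X -> X) : Schauder Xs p -> forall n, additive (p n).
Proof. intros Hs n x y; eapply p_add; eauto. Qed.

Lemma p_zero {X : CBanach} Xs (p : nat -> X -> X) : Schauder Xs p -> forall n, p n vzero = vzero.
Proof. intros Hs n; apply additive_zero; eapply p_additive; eauto. Qed.

Lemma p_sub {X : CBanach} Xs (p : nat -> X -> X) : Schauder Xs p ->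
  forall n x y, p n (vsub x y) = vsub (p n x) (p n y).
Proof.
  intros Hs n x y. unfold vsub. rewrite (p_add _ _ Hs), <- !vscal_m1, (p_scal _ _ Hs); auto.
Qed.

Lemma p_proj {X : CBanach} Xs (p : nat -> X -> X) : Schauder Xs p ->
  forall n k x, p n (p k x) = if Nat.eqb n k then p k x else vzero.
Proof.
  intros Hs n k x. symmetry.
  apply (sch_uniq _ _ Hs (p k x) (fun n => if Nat.eqb n k then p k x else vzero)).
  - intros j. destruct (Nat.eqb_spec j k). subst; eapply sch_in; eauto.
    destruct (sch_sub _ _ Hs j) as [H0 _]; auto.
  - apply conv_eventually with (S k). intros m Hm.
    rewrite (psum_trunc (fun n => if Nat.eqb n k then p k x else vzero) _ (S k) m); auto.
    + simpl. rewrite Nat.eqb_refl. rewrite (psum_ext _ (fun _ => vzero)). rewrite psum_zero, vadd_0l; auto.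
      intros j Hj. destruct (Nat.eqb_spec j k); [lia| auto].
    + intros j. destruct (Nat.ltb_spec j (S k)); auto. destruct (Nat.eqb_spec j k); [lia| auto].
Qed.

Lemma p_PP {X : CBanach} Xs (p : nat -> X -> X) : Schauder Xs p ->
  forall k m x, p k (PP p m x) = if Nat.ltb k m then p k x else vzero.
Proof.
  intros Hs k m x. unfold PP. rewrite psum_map by (eapply p_additive; eauto).
  induction m; simpl.
  - destruct k; auto.
  - rewrite IHm, (p_proj _ _ Hs). destruct (Nat.ltb_spec k m); destruct (Nat.eqb_spec k m);
    destruct (Nat.ltb_spec k (S m)); try lia; subst.
    + rewrite vadd_0; auto.
    + rewrite vadd_0l; auto.
    + rewrite vadd_0; auto.
Qed.

Lemma Emul_sub {X : CBanach} Xs (p : nat -> X -> X) : Schauder Xs p ->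
  forall m x y N, Emul p m (vsub x y) N = vsub (Emul p m x N) (Emul p m y N).
Proof.
  intros Hs m x y N. unfold Emul. rewrite <- psum_sub. apply psum_ext; intros k _.
  rewrite (p_sub _ _ Hs), vsub_scal; auto.
Qed.

Lemma Emul_PP {X : CBanach} Xs (p : nat -> X -> X) : Schauder Xs p ->
  forall m x j N, (j <= N)%nat -> Emul p m (PP p j x) N = Emul p m x j.
Proof.
  intros Hs m x j N Hj. unfold Emul. apply psum_trunc; auto.
  intros k. rewrite (p_PP _ _ Hs). destruct (Nat.ltb k j); auto. apply vscal_zero_v.
Qed.

Lemma mult_p {X : CBanach} Xs (p : nat -> X -> X) : Schauder Xs p ->
  forall m x l, conv (Emul p m x) l -> forall k, p k l = vscal (m k) (p k x).
Proof.
  intros Hs m x l H k. symmetry. apply (sch_uniq _ _ Hs l (fun k => vscal (m k) (p k x))); auto.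
  intros j. destruct (sch_sub _ _ Hs j) as [_ [_ Ha]]. apply Ha; eapply sch_in; eauto.
Qed.

Definition sumL {A} (g : A -> R) (L : list A) : R := fold_right Rplus 0 (map g L).

Lemma sumL_le {A} (g h : A -> R) L : (forall s, g s <= h s) -> sumL g L <= sumL h L.
Proof. intros H; unfold sumL; induction L; simpl; [lra| specialize (H a); lra]. Qed.

Lemma sumL_lin {A} (g h : A -> R) c1 c2 d L :
  sumL (fun s => c1 * g s + c2 * h s + d) L = c1 * sumL g L + c2 * sumL h L + d * INR (length L).
Proof.
  induction L; unfold sumL in *; simpl. ring. rewrite IHL. destruct (length L); simpl; ring.
Qed.

Lemma len_signs n : INR (length (all_signs n)) = 2 ^ n.
Proof.
  induction n; simpl; auto. rewrite length_app, !length_map, plus_INR, IHn; ring.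
Qed.

Lemma rad_norm_eq {X : CBanach} (xs : list X) :
  rad_norm xs = / 2 ^ length xs * sumL (fun s => vnorm (signed_sum s xs)) (all_signs (length xs)).
Proof. reflexivity. Qed.

Lemma rad_norm_le2 {X : CBanach} (L L1 L2 : list X) c1 c2 d :
  length L1 = length L -> length L2 = length L -> 0 <= c1 -> 0 <= c2 ->
  (forall s, vnorm (signed_sum s L) <= c1 * vnorm (signed_sum s L1) + c2 * vnorm (signed_sum s L2) + d) ->
  rad_norm L <= c1 * rad_norm L1 + c2 * rad_norm L2 + d.
Proof.
  intros E1 E2 H1 H2 H. rewrite !rad_norm_eq, E1, E2.
  pose proof (pow_lt 2 (length L) ltac:(lra)).
  eapply Rle_trans. apply Rmult_le_compat_l. left; apply Rinv_0_lt_compat; auto.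
  apply sumL_le. apply H. rewrite sumL_lin, len_signs. right. field. lra.
Qed.

Lemma rad_norm_nonneg {X : CBanach} (xs : list X) : 0 <= rad_norm xs.
Proof.
  rewrite rad_norm_eq. apply Rmult_le_pos. left; apply Rinv_0_lt_compat, pow_lt; lra.
  unfold sumL. induction (all_signs (length xs)); simpl; [lra|]. pose proof (vnorm_nonneg _ (signed_sum a xs)). lra.
Qed.

Lemma rad_single {X : CBanach} (y : X) : rad_norm [y] = vnorm y.
Proof.
  unfold rad_norm. simpl. rewrite !vadd_0. unfold sgn.
  rewrite vscal_m1, vnorm_opp. change (RtoC 1) with Defs.C1. rewrite vscal_1. field.
Qed.

Lemma sgn_mod b : Cmod (sgn b) = 1.
Proof. destruct b; simpl; rewrite Cmod_RtoC; [apply Rabs_R1| unfold Rabs; destruct Rcase_abs; lra]. Qed.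

Lemma ss_add {X : CBanach} {T} (f g : T -> X) s l :
  signed_sum s (map (fun q => vadd (f q) (g q)) l) = vadd (signed_sum s (map f l)) (signed_sum s (map g l)).
Proof.
  revert l; induction s; intros l; destruct l; simpl; try (rewrite vadd_0; reflexivity).
  rewrite IHs, vscal_distr_v, vadd_4; reflexivity.
Qed.

Lemma ss_scal {X : CBanach} {T} (f : T -> X) c s l :
  signed_sum s (map (fun q => vscal c (f q)) l) = vscal c (signed_sum s (map f l)).
Proof.
  revert l; induction s; intros l; destruct l; simpl; try (rewrite vscal_zero_v; reflexivity).
  rewrite IHs, vscal_distr_v, !vscal_assoc. f_equal. apply vscal_eqC. ceq.
Qed.

Lemma ss_sub {X : CBanach} {T} (f g : T -> X) s l :
  signed_sum s (map (fun q => vsub (f q) (g q)) l) = vsub (signed_sum s (map f l)) (signed_sum s (map g l)).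
Proof.
  unfold vsub. rewrite ss_add. f_equal. rewrite <- vscal_m1, <- ss_scal.
  f_equal. apply map_ext; intros; symmetry; apply vscal_m1.
Qed.

Lemma vnorm_ss_le {X : CBanach} s (xs : list X) : vnorm (signed_sum s xs) <= sumL vnorm xs.
Proof.
  assert (Hn : forall xs : list X, 0 <= sumL vnorm xs).
  { intros xs0; unfold sumL; induction xs0; simpl; [lra| pose proof (vnorm_nonneg _ a); lra]. }
  revert xs; induction s; intros xs; destruct xs; simpl; try (rewrite vnorm_zero; apply Hn).
  eapply Rle_trans. apply vnorm_triangle. rewrite vnorm_scal, sgn_mod. specialize (IHs xs). unfold sumL in *; simpl. lra.
Qed.

Lemma rad_add {X : CBanach} {T} (f g : T -> X) l :
  rad_norm (map (fun q => vadd (f q) (g q)) l) <= rad_norm (map f l) + rad_norm (map g l).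
Proof.
  replace (rad_norm (map f l) + rad_norm (map g l)) with (1 * rad_norm (map f l) + 1 * rad_norm (map g l) + 0) by ring.
  apply rad_norm_le2; rewrite ?length_map; auto; try lra.
  intros s. rewrite ss_add. pose proof (vnorm_triangle _ (signed_sum s (map f l)) (signed_sum s (map g l))). lra.
Qed.

Lemma rad_scal {X : CBanach} {T} (f : T -> X) c l :
  rad_norm (map (fun q => vscal c (f q)) l) <= Cmod c * rad_norm (map f l).
Proof.
  replace (Cmod c * rad_norm (map f l)) with (Cmod c * rad_norm (map f l) + 0 * rad_norm (map f l) + 0) by ring.
  apply rad_norm_le2; rewrite ?length_map; auto; try lra. apply Cmod_nonneg.
  intros s. rewrite ss_scal, vnorm_scal. lra.
Qed.

Lemma rad_lip {X : CBanach} {T} (f g : T -> X) l :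
  rad_norm (map f l) <= rad_norm (map g l) + sumL (fun q => vnorm (vsub (f q) (g q))) l.
Proof.
  replace (rad_norm (map g l) + sumL (fun q => vnorm (vsub (f q) (g q))) l) with
    (1 * rad_norm (map g l) + 0 * rad_norm (map g l) + sumL (fun q => vnorm (vsub (f q) (g q))) l) by ring.
  apply rad_norm_le2; rewrite ?length_map; auto; try lra.
  intros s. pose proof (vnorm_triangle_sub (signed_sum s (map f l)) (signed_sum s (map g l))).
  rewrite <- ss_sub in H. pose proof (vnorm_ss_le s (map (fun q => vsub (f q) (g q)) l)).
  unfold sumL in *. rewrite map_map in H0. lra.
Qed.

Lemma vscal_comm {X : CBanach} a b (z : X) : vscal a (vscal b z) = vscal b (vscal a z).
Proof. rewrite !vscal_assoc. apply vscal_eqC. ceq. Qed.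

Lemma aff_l {X : CBanach} t (a b c : X) :
  vadd (vscal (RtoC t) (vadd a b)) (vscal (RtoC (1-t)) (vadd a c)) =
  vadd a (vadd (vscal (RtoC t) b) (vscal (RtoC (1-t)) c)).
Proof.
  rewrite !vscal_distr_v, vadd_4, <- rs_add. replace (t + (1-t)) with 1 by ring. rewrite rs_1; auto.
Qed.

Lemma aff_r {X : CBanach} t (a b c : X) :
  vadd (vscal (RtoC t) (vadd b a)) (vscal (RtoC (1-t)) (vadd c a)) =
  vadd (vadd (vscal (RtoC t) b) (vscal (RtoC (1-t)) c)) a.
Proof. rewrite (vadd_comm _ b), (vadd_comm _ c), aff_l, vadd_comm; auto. Qed.

Lemma aff_0 {X : CBanach} t : vadd (vscal (RtoC t) (@vzero X)) (vscal (RtoC (1-t)) vzero) = vzero.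
Proof. rewrite !vscal_zero_v, vadd_0; auto. Qed.

Lemma ss_affine {X : CBanach} t (z1 z2 : X) B : forall A s,
  signed_sum s (A ++ vadd (vscal (RtoC t) z1) (vscal (RtoC (1-t)) z2) :: B) =
  vadd (vscal (RtoC t) (signed_sum s (A ++ z1 :: B))) (vscal (RtoC (1-t)) (signed_sum s (A ++ z2 :: B))).
Proof.
  induction A; intros s; destruct s as [|b s]; simpl; try (symmetry; apply aff_0).
  - rewrite aff_r. f_equal. rewrite vscal_distr_v, !(vscal_comm (sgn b)); auto.
  - rewrite IHA, aff_l; auto.
Qed.

Lemma conv_coord {X : CBanach} (A B : list X) z1 z2 t : 0 <= t <= 1 ->
  rad_norm (A ++ vadd (vscal (RtoC t) z1) (vscal (RtoC (1-t)) z2) :: B) <=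
  t * rad_norm (A ++ z1 :: B) + (1 - t) * rad_norm (A ++ z2 :: B).
Proof.
  intros Ht. replace (t * rad_norm (A ++ z1 :: B) + (1 - t) * rad_norm (A ++ z2 :: B)) with
    (t * rad_norm (A ++ z1 :: B) + (1 - t) * rad_norm (A ++ z2 :: B) + 0) by ring.
  apply rad_norm_le2; rewrite ?length_app; simpl; auto; try lra.
  intros s. rewrite ss_affine. eapply Rle_trans. apply vnorm_triangle.
  rewrite !vnorm_scal, !Cmod_RtoC, !Rabs_right by lra. lra.
Qed.

Lemma sumL_ext {A} (g h : A -> R) L : (forall s, g s = h s) -> sumL g L = sumL h L.
Proof. intros H; unfold sumL; induction L; simpl; auto. rewrite H, IHL; auto. Qed.

Lemma sumL_app {A} (g : A -> R) L1 L2 : sumL g (L1 ++ L2) = sumL g L1 + sumL g L2.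
Proof. unfold sumL; induction L1; simpl; [ring| rewrite IHL1; ring]. Qed.

Lemma sumL_map {A B} (g : A -> R) (f : B -> A) L : sumL g (map f L) = sumL (fun s => g (f s)) L.
Proof. unfold sumL. rewrite map_map; auto. Qed.

Lemma sym_gen {X : CBanach} (z : X) B : forall A (v : X),
  sumL (fun s => vnorm (vadd v (signed_sum s (A ++ vopp z :: B)))) (all_signs (length A + S (length B))) =
  sumL (fun s => vnorm (vadd v (signed_sum s (A ++ z :: B)))) (all_signs (length A + S (length B))).
Proof.
  induction A; intros v; simpl.
  - rewrite !sumL_app, !sumL_map. simpl.
    rewrite Rplus_comm. f_equal; apply sumL_ext; intros s; f_equal; f_equal; f_equal; unfold sgn.
    + rewrite vscal_m1, vopp_opp, rs_1; auto.
    + rewrite rs_1, vscal_m1; auto.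
  - rewrite !sumL_app, !sumL_map. simpl.
    f_equal.
    + rewrite (sumL_ext _ (fun s => vnorm (vadd (vadd v (vscal (sgn true) a)) (signed_sum s (A ++ vopp z :: B))))).
      rewrite (sumL_ext (fun s => vnorm (vadd v (vadd (vscal (sgn true) a) (signed_sum s (A ++ z :: B))))) (fun s => vnorm (vadd (vadd v (vscal (sgn true) a)) (signed_sum s (A ++ z :: B))))).
      apply IHA. intros; rewrite vadd_assoc; auto. intros; rewrite vadd_assoc; auto.
    + rewrite (sumL_ext _ (fun s => vnorm (vadd (vadd v (vscal (sgn false) a)) (signed_sum s (A ++ vopp z :: B))))).
      rewrite (sumL_ext (fun s => vnorm (vadd v (vadd (vscal (sgn false) a) (signed_sum s (A ++ z :: B))))) (fun s => vnorm (vadd (vadd v (vscal (sgn false) a)) (signed_sum s (A ++ z :: B))))).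
      apply IHA. intros; rewrite vadd_assoc; auto. intros; rewrite vadd_assoc; auto.
Qed.

Lemma rad_sym {X : CBanach} (A B : list X) z :
  rad_norm (A ++ vopp z :: B) = rad_norm (A ++ z :: B).
Proof.
  rewrite !rad_norm_eq, !length_app. simpl. f_equal.
  rewrite (sumL_ext _ (fun s => vnorm (vadd vzero (signed_sum s (A ++ vopp z :: B))))).
  rewrite (sumL_ext (fun s => vnorm (signed_sum s (A ++ z :: B))) (fun s => vnorm (vadd vzero (signed_sum s (A ++ z :: B))))).
  apply sym_gen. intros; rewrite vadd_0l; auto. intros; rewrite vadd_0l; auto.
Qed.

Inductive hull {X : CBanach} (F : (X -> X) -> Prop) (x : X) : X -> Prop :=
| hull_op : forall S, F S -> hull F x (S x)
| hull_opp : forall y, hull F x y -> hull F x (vopp y)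
| hull_cv : forall t y1 y2, 0 <= t <= 1 -> hull F x y1 -> hull F x y2 ->
    hull F x (vadd (vscal (RtoC t) y1) (vscal (RtoC (1-t)) y2)).

Lemma hull_Rbound {X : CBanach} (F : (X -> X) -> Prop) K :
  (forall ts : list ((X -> X) * X), (forall q, In q ts -> F (fst q)) ->
    rad_norm (map (fun q => fst q (snd q)) ts) <= K * rad_norm (map snd ts)) ->
  forall l2 : list (X * X), (forall q, In q l2 -> hull F (fst q) (snd q)) ->
  forall l1 : list ((X -> X) * X), (forall q, In q l1 -> F (fst q)) ->
  rad_norm (map (fun q => fst q (snd q)) l1 ++ map snd l2) <= K * rad_norm (map snd l1 ++ map fst l2).
Proof.
  intros HK. induction l2 as [|[x y] l2 IH]; intros Hl2 l1 Hl1.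
  - simpl; rewrite !app_nil_r. apply HK; auto.
  - simpl. assert (Hy : hull F x y) by (apply (Hl2 (x,y)); left; auto).
    assert (Hl2' : forall q, In q l2 -> hull F (fst q) (snd q)) by (intros; apply Hl2; right; auto).
    clear Hl2. induction Hy.
    + specialize (IH Hl2' (l1 ++ [(S, x)])).
      rewrite !map_app in IH. simpl in IH. rewrite <- !app_assoc in IH. apply IH.
      intros q Hq. apply in_app_or in Hq. destruct Hq as [Hq|[<-|[]]]; auto.
    + rewrite rad_sym; auto.
    + eapply Rle_trans. apply conv_coord; auto.
      pose proof (rad_norm_nonneg (map snd l1 ++ x :: map fst l2)).
      apply Rle_trans with (t * (K * rad_norm (map snd l1 ++ x :: map fst l2)) + (1-t) * (K * rad_norm (map snd l1 ++ x :: map fst l2))).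
      apply Rplus_le_compat; apply Rmult_le_compat_l; lra.
      right; ring.
Qed.

Lemma hull_Rbound_list {X : CBanach} (F : (X -> X) -> Prop) K :
  (forall ts : list ((X -> X) * X), (forall q, In q ts -> F (fst q)) ->
    rad_norm (map (fun q => fst q (snd q)) ts) <= K * rad_norm (map snd ts)) ->
  forall l : list (X * X), (forall q, In q l -> hull F (fst q) (snd q)) ->
  rad_norm (map snd l) <= K * rad_norm (map fst l).
Proof.
  intros HK l Hl. apply (hull_Rbound F K HK l Hl nil). intros _ [].
Qed.

Lemma hull_norm {X : CBanach} (F : (X -> X) -> Prop) K :
  (forall ts : list ((X -> X) * X), (forall q, In q ts -> F (fst q)) ->
    rad_norm (map (fun q => fst q (snd q)) ts) <= K * rad_norm (map snd ts)) ->
  forall x y, hull F x y -> vnorm y <= K * vnorm x.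
Proof.
  intros HK x y H. pose proof (hull_Rbound_list F K HK [(x,y)]). simpl in H0.
  rewrite !rad_single in H0. apply H0. intros q [<-|[]]; auto.
Qed.

Lemma div_nonneg a b : 0 <= a -> 0 < b -> 0 <= a / b.
Proof. intros; apply Rmult_le_pos; [auto| left; apply Rinv_0_lt_compat; auto]. Qed.

Lemma div_le1 a b : a <= b -> 0 < b -> a / b <= 1.
Proof. intros H1 H2. apply Rmult_le_reg_r with b; auto. unfold Rdiv. rewrite Rmult_assoc, Rinv_l by lra. lra. Qed.

Lemma pos_of_ne a : 0 <= a -> a <> 0 -> 0 < a.
Proof. intros H1 H2. destruct H1; auto. congruence. Qed.

Lemma hull_zero {X : CBanach} F (x : X) : (exists y, hull F x y) -> hull F x vzero.
Proof.
  intros [y Hy]. replace vzero with (vadd (vscal (RtoC (1/2)) y) (vscal (RtoC (1 - 1/2)) (vopp y))).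
  apply hull_cv; auto; try lra. apply hull_opp; auto.
  rewrite vscal_opp_v. replace (1 - 1/2) with (1/2) by field. apply vadd_opp.
Qed.

Lemma hull_rscal {X : CBanach} F (x : X) c y : Rabs c <= 1 -> hull F x y -> hull F x (vscal (RtoC c) y).
Proof.
  intros Hc Hy. assert (- 1 <= c <= 1) by (revert Hc; unfold Rabs; destruct Rcase_abs; intros; lra).
  replace (vscal (RtoC c) y) with (vadd (vscal (RtoC ((1+c)/2)) y) (vscal (RtoC (1 - (1+c)/2)) (vopp y))).
  apply hull_cv; auto; try lra. apply hull_opp; auto.
  rewrite vscal_opp_v, <- rs_opp, <- rs_add. f_equal. unfold RtoC; f_equal; field.
Qed.

Lemma hull_comb {X : CBanach} F (x : X) a b y1 y2 : (exists y, hull F x y) ->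
  0 <= a -> 0 <= b -> a + b <= 1 -> hull F x y1 -> hull F x y2 ->
  hull F x (vadd (vscal (RtoC a) y1) (vscal (RtoC b) y2)).
Proof.
  intros Hne Ha Hb Hab H1 H2.
  destruct (Req_dec (a + b) 0) as [Hz|Hnz].
  - assert (a = 0) by lra. assert (b = 0) by lra. subst. rewrite !vscal_0, vadd_0. apply hull_zero; auto.
  - assert (Hs : 0 < a + b) by (apply pos_of_ne; lra).
    replace (vadd (vscal (RtoC a) y1) (vscal (RtoC b) y2)) with
      (vscal (RtoC (a+b)) (vadd (vscal (RtoC (a / (a+b))) y1) (vscal (RtoC (1 - a / (a+b))) y2))).
    apply hull_rscal. rewrite Rabs_right; lra.
    apply hull_cv; auto. split. apply div_nonneg; lra.
    apply div_le1; lra.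
    rewrite vscal_distr_v, !rs_mul. f_equal; f_equal; unfold RtoC; f_equal; field; lra.
Qed.

Definition shull {X : CBanach} F (x y : X) W := exists z, hull F x z /\ y = vscal (RtoC W) z.

Lemma shull_zero {X : CBanach} F (x : X) : (exists y, hull F x y) -> shull F x vzero 0.
Proof. intros [y Hy]. exists y; split; auto. rewrite vscal_0; auto. Qed.

Lemma shull_op {X : CBanach} F (x y : X) : hull F x y -> shull F x y 1.
Proof. intros H; exists y; split; auto. rewrite rs_1; auto. Qed.

Lemma shull_eqw {X : CBanach} F (x y : X) W W' : W = W' -> shull F x y W -> shull F x y W'.
Proof. intros ->; auto. Qed.

Lemma shull_add {X : CBanach} F (x y1 y2 : X) W1 W2 : (exists y, hull F x y) ->
  0 <= W1 -> 0 <= W2 -> shull F x y1 W1 -> shull F x y2 W2 -> shull F x (vadd y1 y2) (W1 + W2).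
Proof.
  intros Hne H1 H2 [z1 [Hz1 ->]] [z2 [Hz2 ->]].
  destruct (Req_dec (W1 + W2) 0) as [Hz|Hnz].
  - assert (W1 = 0) by lra. assert (W2 = 0) by lra. subst. rewrite !vscal_0, vadd_0.
    rewrite Rplus_0_r. apply shull_zero; auto.
  - assert (Hs : 0 < W1 + W2) by (apply pos_of_ne; lra).
    exists (vadd (vscal (RtoC (W1/(W1+W2))) z1) (vscal (RtoC (W2/(W1+W2))) z2)). split.
    apply hull_comb; auto. apply div_nonneg; lra. apply div_nonneg; lra.
    right; field; lra.
    rewrite vscal_distr_v, !rs_mul. f_equal; f_equal; unfold RtoC; f_equal; field; lra.
Qed.

Lemma shull_rscal {X : CBanach} F (x y : X) W c : (exists y, hull F x y) ->
  shull F x y W -> shull F x (vscal (RtoC c) y) (Rabs c * W).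
Proof.
  intros Hne [z [Hz ->]].
  destruct (Req_dec c 0) as [->|Hc].
  - rewrite vscal_0, Rabs_R0, Rmult_0_l. apply shull_zero; auto.
  - exists (vscal (RtoC (c / Rabs c)) z). split.
    apply hull_rscal; auto. unfold Rdiv. rewrite Rabs_mult, Rabs_inv, Rabs_Rabsolu.
    right; field. apply Rabs_no_R0; auto.
    rewrite !rs_mul. f_equal; unfold RtoC; f_equal. field. apply Rabs_no_R0; auto.
Qed.

Lemma shull_mono {X : CBanach} F (x y : X) W W' : shull F x y W -> 0 <= W <= W' -> shull F x y W'.
Proof.
  intros [z [Hz ->]] HW. destruct (Req_dec W' 0) as [Hz'|Hnz].
  - assert (W = 0) by lra. subst. exists z; split; auto.
  - assert (Hs : 0 < W') by (apply pos_of_ne; lra).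
    exists (vscal (RtoC (W / W')) z). split.
    apply hull_rscal; auto. rewrite Rabs_right. apply div_le1; lra. apply Rle_ge, div_nonneg; lra.
    rewrite rs_mul. f_equal; unfold RtoC; f_equal; field; lra.
Qed.

Definition PF {X : CBanach} (p : nat -> X -> X) := partial_projs p.

Lemma hull_PP {X : CBanach} (p : nat -> X -> X) x n : hull (PF p) x (PP p (S n) x).
Proof. apply (hull_op (PF p) x (PP p (S n))). exists (S n); split; [lia| reflexivity]. Qed.

Lemma hull_ne {X : CBanach} (p : nat -> X -> X) x : exists y, hull (PF p) x y.
Proof. exists (PP p 1 x); apply hull_PP. Qed.

Lemma abel_ident {X : CBanach} a b (P G d : X) :
  vadd (vadd (vscal (RtoC a) P) G) (vscal (RtoC b) d) =
  vadd (vscal (RtoC b) (vadd P d)) (vadd (vscal (RtoC (a - b)) P) G).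
Proof.
  rewrite vscal_distr_v, vadd_4, <- rs_add. replace (b + (a - b)) with a by ring.
  rewrite <- vadd_assoc, (vadd_comm _ G); auto.
Qed.

Definition var (r : nat -> R) (n : nat) := sumR (fun k => Rabs (r (S k) - r k)) n.

Lemma abel_real {X : CBanach} (p : nat -> X -> X) (r : nat -> R) x : forall n, exists G,
  psum (fun k => vscal (RtoC (r k)) (p k x)) (S n) = vadd (vscal (RtoC (r n)) (PP p (S n) x)) G /\
  shull (PF p) x G (var r n).
Proof.
  induction n.
  - exists vzero. split. simpl. unfold PP; simpl. rewrite !vadd_0l, vadd_0; auto.
    apply shull_zero, hull_ne.
  - destruct IHn as [G [HE HG]].
    exists (vadd (vscal (RtoC (r n - r (S n))) (PP p (S n) x)) G). split.
    + change (psum (fun k => vscal (RtoC (r k)) (p k x)) (S (S n))) with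
        (vadd (psum (fun k => vscal (RtoC (r k)) (p k x)) (S n)) (vscal (RtoC (r (S n))) (p (S n) x))).
      rewrite HE. change (PP p (S (S n)) x) with (vadd (PP p (S n) x) (p (S n) x)).
      apply abel_ident.
    + assert (0 <= var r n) by (apply sumR_nonneg; intros; apply Rabs_pos).
      eapply shull_eqw; [| apply shull_add; [apply hull_ne| | |apply shull_rscal; [apply hull_ne| apply shull_op, hull_PP]| apply HG]].
      unfold var; simpl. rewrite Rabs_minus_sym; ring. pose proof (Rabs_pos (r n - r (S n))); lra. auto.
Qed.

Lemma real_E_shull {X : CBanach} (p : nat -> X -> X) (r : nat -> R) M V x :
  (forall k, Rabs (r k) <= M) -> (forall n, var r n <= V) ->
  forall N, shull (PF p) x (psum (fun k => vscal (RtoC (r k)) (p k x)) N) (M + V).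
Proof.
  intros HM HV N.
  assert (HM0 : 0 <= M) by (specialize (HM O); pose proof (Rabs_pos (r O)); lra).
  assert (HV0 : 0 <= V) by (specialize (HV O); unfold var in HV; simpl in HV; lra).
  destruct N as [|n].
  - eapply shull_mono. apply shull_zero, hull_ne. lra.
  - destruct (abel_real p r x n) as [G [-> HG]].
    assert (0 <= var r n) by (apply sumR_nonneg; intros; apply Rabs_pos).
    eapply shull_mono. apply shull_add. apply hull_ne.
    2: apply H. 2: apply shull_rscal; [apply hull_ne| apply shull_op, hull_PP]. 2: apply HG.
    pose proof (Rabs_pos (r n)); lra.
    split. pose proof (Rabs_pos (r n)); lra. specialize (HM n); specialize (HV n); lra.
Qed.

Definition bv (m : nat -> Defs.C) M V :=
  (forall k, Cmod (m k) <= M) /\ (forall n, sumR (fun k => Cmod (Cminus (m (S k)) (m k))) n <= V).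

Definition Ci : Defs.C := (0, 1).

Lemma Cmod_Ci : Cmod Ci = 1.
Proof. unfold Cmod, Ci; simpl. assert (H: 0*(0*1) + 1*(1*1) = 1) by ring. rewrite H; apply sqrt_1. Qed.

Lemma fst_le_Cmod (a : Defs.C) : Rabs (fst a) <= Cmod a.
Proof. pose proof (Complex.Rmax_Cmod a) as H1. pose proof (Rmax_l (Rabs (fst a)) (Rabs (snd a))). unfold Complex.Cmod in H1. unfold Cmod. lra. Qed.
Lemma snd_le_Cmod (a : Defs.C) : Rabs (snd a) <= Cmod a.
Proof. pose proof (Complex.Rmax_Cmod a) as H1. pose proof (Rmax_r (Rabs (fst a)) (Rabs (snd a))). unfold Complex.Cmod in H1. unfold Cmod. lra. Qed.

Lemma vscal_split {X : CBanach} (a : Defs.C) (v : X) :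
  vscal a v = vadd (vscal (RtoC (fst a)) v) (vscal Ci (vscal (RtoC (snd a)) v)).
Proof. rewrite vscal_assoc, <- vscal_distr_s. apply vscal_eqC. ceq. Qed.

Lemma Emul_split {X : CBanach} (p : nat -> X -> X) m x N :
  Emul p m x N = vadd (psum (fun k => vscal (RtoC (fst (m k))) (p k x)) N)
                      (vscal Ci (psum (fun k => vscal (RtoC (snd (m k))) (p k x)) N)).
Proof.
  unfold Emul. rewrite <- psum_scal, <- psum_add. apply psum_ext; intros; apply vscal_split.
Qed.

Definition Good {X : CBanach} (p : nat -> X -> X) W (x u : X) :=
  exists y1 y2, shull (PF p) x y1 W /\ shull (PF p) x y2 W /\ u = vadd y1 (vscal Ci y2).

Lemma Emul_good {X : CBanach} (p : nat -> X -> X) m M V x N : bv m M V -> Good p (M + V) x (Emul p m x N).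
Proof.
  intros [HM HV]. rewrite Emul_split. do 2 eexists; split; [| split; [| reflexivity]];
  apply real_E_shull.
  - intros k. eapply Rle_trans; [apply fst_le_Cmod| apply HM].
  - intros n. eapply Rle_trans; [| apply (HV n)]. apply sumR_le; intros k.
    pose proof (fst_le_Cmod (Cminus (m (S k)) (m k))). simpl in H. auto.
  - intros k. eapply Rle_trans; [apply snd_le_Cmod| apply HM].
  - intros n. eapply Rle_trans; [| apply (HV n)]. apply sumR_le; intros k.
    pose proof (snd_le_Cmod (Cminus (m (S k)) (m k))). simpl in H. auto.
Qed.

Definition Rbd {X : CBanach} (F : (X -> X) -> Prop) K :=
  forall ts : list ((X -> X) * X), (forall q, In q ts -> F (fst q)) ->
    rad_norm (map (fun q => fst q (snd q)) ts) <= K * rad_norm (map snd ts).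

Lemma Good_list {X : CBanach} (p : nat -> X -> X) K W : Rbd (PF p) K -> 0 <= W ->
  forall l : list (X * X), (forall q, In q l -> Good p W (fst q) (snd q)) ->
  rad_norm (map snd l) <= 2 * W * K * rad_norm (map fst l).
Proof.
  intros HK HW l Hl.
  assert (HL : exists L : list (X * (X * X)), map fst L = map fst l /\
     map (fun q => vadd (vscal (RtoC W) (fst (snd q))) (vscal Ci (vscal (RtoC W) (snd (snd q))))) L = map snd l /\
     forall q, In q L -> hull (PF p) (fst q) (fst (snd q)) /\ hull (PF p) (fst q) (snd (snd q))).
  { revert Hl; induction l as [|[x u] l IH]; intros Hl.
    - exists nil; simpl; split; [reflexivity| split; [reflexivity| intros _ []]].
    - destruct (IH (fun q Hq => Hl q (or_intror Hq))) as [L [H1 [H2 H3]]].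
      pose proof (Hl (x,u) (or_introl eq_refl)) as G; simpl in G; destruct G as [y1 [y2 [[z1 [Hz1 ->]] [[z2 [Hz2 ->]] ->]]]].
      exists ((x, (z1, z2)) :: L). simpl. rewrite H1, H2. split; [reflexivity| split; [reflexivity|]].
      intros q [<-|Hq]; simpl; auto. }
  destruct HL as [L [H1 [H2 H3]]]. rewrite <- H2, <- H1.
  eapply Rle_trans. apply rad_add.
  assert (Hz1 : rad_norm (map (fun q => fst (snd q)) L) <= K * rad_norm (map fst L)).
  { pose proof (hull_Rbound_list (PF p) K HK (map (fun q => (fst q, fst (snd q))) L)).
    rewrite !map_map in H. simpl in H. apply H. intros q Hq. apply in_map_iff in Hq.
    destruct Hq as [q' [<- Hq']]. apply H3; auto. }
  assert (Hz2 : rad_norm (map (fun q => snd (snd q)) L) <= K * rad_norm (map fst L)).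
  { pose proof (hull_Rbound_list (PF p) K HK (map (fun q => (fst q, snd (snd q))) L)).
    rewrite !map_map in H. simpl in H. apply H. intros q Hq. apply in_map_iff in Hq.
    destruct Hq as [q' [<- Hq']]. apply H3; auto. }
  pose proof (rad_scal (fun q => fst (snd q)) (RtoC W) L).
  pose proof (rad_scal (fun q => vscal (RtoC W) (snd (snd q))) Ci L).
  pose proof (rad_scal (fun q => snd (snd q)) (RtoC W) L).
  rewrite Cmod_Ci, Cmod_RtoC, Rabs_right in * by lra.
  apply Rle_trans with (W * (K * rad_norm (map fst L)) + W * (K * rad_norm (map fst L))).
  - apply Rplus_le_compat.
    + eapply Rle_trans; [apply H| apply Rmult_le_compat_l; auto].
    + eapply Rle_trans; [apply H0|]. rewrite Rmult_1_l. eapply Rle_trans; [apply H4| apply Rmult_le_compat_l; auto].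
  - right; ring.
Qed.

Lemma Emul_norm {X : CBanach} (p : nat -> X -> X) K m M V : Rbd (PF p) K -> bv m M V ->
  forall x N, vnorm (Emul p m x N) <= 2 * (M + V) * K * vnorm x.
Proof.
  intros HK Hbv x N. pose proof (Good_list p K (M + V) HK) as G.
  assert (0 <= M + V). { destruct Hbv as [HM HV]. specialize (HM O); specialize (HV O); simpl in HV.
    pose proof (Cmod_nonneg (m O)). lra. }
  specialize (G H [(x, Emul p m x N)]). simpl in G. rewrite !rad_single in G. apply G.
  intros q [<-|[]]. apply Emul_good; auto.
Qed.

Lemma mult_exists {X : CBanach} Xs (p : nat -> X -> X) K m M V : Schauder Xs p -> Rbd (PF p) K -> bv m M V ->
  forall x, exists l, conv (Emul p m x) l.
Proof.
  intros Hs HK Hbv x. set (Cc := Rabs (2 * (M + V) * K) + 1).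
  assert (HC : 0 < Cc) by (unfold Cc; pose proof (Rabs_pos (2 * (M + V) * K)); lra).
  assert (Hb : forall y N, vnorm (Emul p m y N) <= Cc * vnorm y).
  { intros y N. eapply Rle_trans. apply (Emul_norm p K m M V HK Hbv).
    apply Rmult_le_compat_r. apply vnorm_nonneg. unfold Cc. pose proof (Rle_abs (2 * (M + V) * K)). lra. }
  assert (Hc : forall a b, (b <= a)%nat -> vsub (Emul p m x a) (Emul p m x b) = Emul p m (vsub x (PP p b x)) a).
  { intros a b Hab. rewrite (Emul_sub _ _ Hs), (Emul_PP _ _ Hs); auto. }
  apply vcomplete. intros eps Heps.
  destruct (sch_conv _ _ Hs x (eps / Cc)) as [N HN]. apply Rdiv_lt_0_compat; auto.
  exists N. intros a b Ha Hb'. change (vnorm (vsub (Emul p m x a) (Emul p m x b)) < eps).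
  assert (key : forall a b, (N <= b)%nat -> (b <= a)%nat -> vnorm (vsub (Emul p m x a) (Emul p m x b)) < eps).
  { intros a' b' Hb1 Hb2. rewrite Hc by auto. eapply Rle_lt_trans. apply Hb.
    specialize (HN b' Hb1). rewrite vnorm_sub_sym in HN. unfold PP.
    apply Rlt_le_trans with (Cc * (eps / Cc)). apply Rmult_lt_compat_l; auto.
    right; field; lra. }
  destruct (Nat.le_gt_cases b a). apply key; auto. rewrite vnorm_sub_sym. apply key; lia.
Qed.

Lemma le_eps a b : (forall eps, 0 < eps -> a <= b + eps) -> a <= b.
Proof. intros H. apply Rnot_lt_le; intros Hlt. specialize (H ((a - b)/2)). lra. Qed.

Lemma mult_Rbound {X : CBanach} (p : nat -> X -> X) K M V (F : (X -> X) -> Prop) :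
  Rbd (PF p) K ->
  (forall S, F S -> exists m, bv m M V /\ forall x, conv (Emul p m x) (S x)) -> R_bounded F.
Proof.
  intros HK HF. exists (2 * (M + V) * K). intros ts Hts.
  assert (HMV : forall S, F S -> 0 <= M + V).
  { intros S HS. destruct (HF S HS) as [m [[HM HV] _]]. specialize (HM O); specialize (HV O); simpl in HV.
    pose proof (Cmod_nonneg (m O)). lra. }
  destruct ts as [|t0 ts0].
  { simpl. unfold rad_norm; simpl. rewrite vnorm_zero. lra. }
  assert (H0 : 0 <= M + V) by (apply (HMV (fst t0)), Hts; left; auto).
  apply le_eps. intros eps Heps.
  assert (HL : forall ts, (forall q, In q ts -> F (fst q)) -> forall eps, 0 < eps ->
    exists L : list (((X -> X) * X) * X), map fst L = ts /\
      (forall q, In q L -> Good p (M + V) (snd (fst q)) (snd q)) /\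
      sumL (fun q => vnorm (vsub (fst (fst q) (snd (fst q))) (snd q))) L < eps).
  { clear eps Heps. induction ts as [|[S x] ts IH]; intros Hts' eps Heps.
    - exists nil. simpl. split; [reflexivity| split; [intros _ []| unfold sumL; simpl; lra]].
    - destruct (IH (fun q Hq => Hts' q (or_intror Hq)) (eps/2)) as [L [H1 [H2 H3]]]. lra.
      destruct (HF S (Hts' (S,x) (or_introl eq_refl))) as [m [Hbv Hc]].
      destruct (Hc x (eps/2)) as [N HN]. lra.
      exists (((S,x), Emul p m x N) :: L). simpl. rewrite H1. repeat split; auto.
      + intros q [<-|Hq]; simpl; auto. apply Emul_good; auto.
      + unfold sumL in *; simpl. specialize (HN N (le_n _)). rewrite vnorm_sub_sym in HN. lra. }
  destruct (HL _ Hts eps Heps) as [L [H1 [H2 H3]]].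
  rewrite <- H1, !map_map.
  eapply Rle_trans. apply (rad_lip (fun q => fst (fst q) (snd (fst q))) snd L).
  pose proof (Good_list p K (M + V) HK H0 (map (fun q => (snd (fst q), snd q)) L)).
  rewrite !map_map in H. simpl in H.
  assert (rad_norm (map snd L) <= 2 * (M + V) * K * rad_norm (map (fun q => snd (fst q)) L)).
  { apply H. intros q Hq. apply in_map_iff in Hq. destruct Hq as [q' [<- Hq']]. apply H2; auto. }
  lra.
Qed.

Lemma psum_single {X : CBanach} (g : nat -> X) k v N :
  (forall j, g j = if Nat.eqb j k then v else vzero) -> (S k <= N)%nat -> psum g N = v.
Proof.
  intros Hg HN. rewrite (psum_trunc (fun j => if Nat.eqb j k then v else vzero) g (S k) N); auto.
  - simpl. rewrite Nat.eqb_refl. rewrite (psum_ext _ (fun _ => vzero)). rewrite psum_zero, vadd_0l; auto.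
    intros j Hj. destruct (Nat.eqb_spec j k); [lia| auto].
  - intros j. rewrite Hg. destruct (Nat.ltb_spec j (S k)); auto. destruct (Nat.eqb_spec j k); [lia| auto].
Qed.

Lemma Cmod_Cminus_R a b : Cmod (Cminus (RtoC a) (RtoC b)) = Rabs (a - b).
Proof. rewrite <- Cmod_RtoC. f_equal. unfold Cminus, RtoC; simpl; f_equal; ring. Qed.

Lemma rs_sub {X : CBanach} a b (v : X) : vsub (vscal (RtoC a) v) (vscal (RtoC b) v) = vscal (RtoC (a - b)) v.
Proof. unfold vsub, Rminus. rewrite rs_add, rs_opp; auto. Qed.

Lemma mono_le (c : nat -> R) : (forall n, c n <= c (S n)) -> forall k j, (k <= j)%nat -> c k <= c j.
Proof. intros H k j Hkj. induction Hkj; [lra| specialize (H m); lra]. Qed.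

Lemma exists_least (P : nat -> Prop) : (exists k, P k) -> exists k, P k /\ forall j, (j < k)%nat -> ~ P j.
Proof.
  intros [k Hk]. revert Hk. induction k as [k IH] using (well_founded_induction Wf_nat.lt_wf). intros Hk.
  destruct (classic (exists j, (j < k)%nat /\ P j)) as [[j [Hj HPj]]|Hn].
  - apply (IH j Hj HPj).
  - exists k; split; auto. intros j Hj HPj; apply Hn; eauto.
Qed.

Lemma var_unimodal (u : nat -> R) B k0 :
  (forall k, 0 <= u k <= B) -> (forall k, (k < k0)%nat -> u k <= u (S k)) ->
  (forall k, (k0 < k)%nat -> u (S k) <= u k) -> forall N, var u N <= 3 * B.
Proof.
  intros Hb Hup Hdn N. unfold var.
  assert (C1 : forall N, (N <= k0)%nat -> sumR (fun k => Rabs (u (S k) - u k)) N = u N - u O).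
  { induction N0; intros HN; simpl. ring. rewrite IHN0 by lia. rewrite Rabs_right. ring.
    specialize (Hup N0 ltac:(lia)); lra. }
  assert (C2 : forall N, (S k0 <= N)%nat -> sumR (fun k => Rabs (u (S k) - u k)) N =
     u k0 - u O + Rabs (u (S k0) - u k0) + u (S k0) - u N).
  { intros N0 HN. induction HN. simpl. rewrite C1 by lia. ring.
    simpl. rewrite IHHN. rewrite (Rabs_left1 (u (S m) - u m)). ring. specialize (Hdn m ltac:(lia)); lra. }
  destruct (Nat.le_gt_cases N k0).
  - rewrite C1 by auto. pose proof (Hb N); pose proof (Hb O); lra.
  - rewrite C2 by lia. pose proof (Hb k0); pose proof (Hb O); pose proof (Hb (S k0)); pose proof (Hb N).
    assert (Rabs (u (S k0) - u k0) <= B) by (apply Rabs_le; lra). lra.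
Qed.

Lemma bern1 j s t : 0 <= s <= t -> INR (S j) * s ^ j * (t - s) <= t ^ S j - s ^ S j.
Proof.
  intros Hst. induction j.
  - simpl. lra.
  - rewrite S_INR. replace (t ^ S (S j) - s ^ S (S j)) with (t * (t ^ S j - s ^ S j) + s ^ S j * (t - s)) by (simpl; ring).
    pose proof (pow_le s j ltac:(lra)). pose proof (pos_INR (S j)).
    assert (INR (S j) * s ^ j * (t - s) * s <= (t ^ S j - s ^ S j) * t).
    { apply Rmult_le_compat; try nra. apply Rmult_le_pos; nra. }
    simpl. simpl in H1. nra.
Qed.

Lemma bern2 j s t : 0 <= s <= t -> t ^ S j - s ^ S j <= INR (S j) * t ^ j * (t - s).
Proof.
  intros Hst. induction j.
  - simpl. lra.
  - rewrite S_INR. replace (t ^ S (S j) - s ^ S (S j)) with (t * (t ^ S j - s ^ S j) + s ^ S j * (t - s)) by (simpl; ring).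
    pose proof (pow_le s (S j) ltac:(lra)). pose proof (pow_incr s t (S j) Hst).
    assert (t * (t ^ S j - s ^ S j) <= t * (INR (S j) * t ^ j * (t - s))) by (apply Rmult_le_compat_l; lra).
    assert (s ^ S j * (t - s) <= t ^ S j * (t - s)) by (apply Rmult_le_compat_r; lra).
    simpl in *. nra.
Qed.

Definition fR (n : nat) (t : R) := INR n * (t ^ n - t ^ S n).

Lemma fR_bound n t : 0 <= t <= 1 -> 0 <= fR n t <= 1.
Proof.
  intros Ht. unfold fR.
  assert (P : t ^ n * (1 + INR n * (1 - t)) <= 1).
  { induction n. simpl. lra.
    rewrite S_INR. pose proof (pow_le t n ltac:(lra)). pose proof (pow_incr t 1 n ltac:(lra)). rewrite pow1 in H0.
    replace (t ^ S n * (1 + (INR n + 1) * (1 - t))) with (t * (t ^ n * (1 + INR n * (1 - t))) + t ^ S n * (1 - t)) by (simpl; ring).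
    assert (t * (t ^ n * (1 + INR n * (1 - t))) <= t * 1) by (apply Rmult_le_compat_l; lra).
    assert (t ^ S n * (1 - t) <= 1 * (1 - t)) by (apply Rmult_le_compat_r; [lra| simpl; nra]).
    lra. }
  pose proof (pow_le t n ltac:(lra)). pose proof (pos_INR n).
  replace (t ^ n - t ^ S n) with (t ^ n * (1 - t)) by (simpl; ring).
  split. apply Rmult_le_pos; auto. apply Rmult_le_pos; lra.
  assert (INR n * (t ^ n * (1 - t)) <= t ^ n * (1 + INR n * (1 - t))).
  { replace (t ^ n * (1 + INR n * (1 - t))) with (t ^ n + INR n * (t ^ n * (1 - t))) by ring. lra. }
  lra.
Qed.

Lemma fR_up j s t : 0 <= s <= t -> t <= INR (S j) / (INR (S j) + 1) -> fR (S j) s <= fR (S j) t.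
Proof.
  intros Hst Ht. unfold fR. apply Rmult_le_compat_l. apply pos_INR.
  pose proof (bern1 j s t Hst). pose proof (pos_INR (S j)).
  assert (Hn : INR (S j) * (1 - t) >= t).
  { apply Rmult_le_compat_r with (r := INR (S j) + 1) in Ht; [|lra].
    unfold Rdiv in Ht. rewrite Rmult_assoc, Rinv_l in Ht by lra. nra. }
  pose proof (pow_le s j ltac:(lra)).
  assert (t <= 1). { assert (INR (S j) / (INR (S j) + 1) <= 1) by (apply div_le1; lra). lra. }
  replace (t ^ S j - t ^ S (S j)) with (t ^ S j * (1 - t)) by (simpl; ring).
  replace (s ^ S j - s ^ S (S j)) with (s ^ S j * (1 - s)) by (simpl; ring).
  assert (A1 : (s ^ S j + INR (S j) * s ^ j * (t - s)) * (1 - t) <= t ^ S j * (1 - t)) by (apply Rmult_le_compat_r; lra).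
  assert (A2 : s ^ j * (t - s) * s <= s ^ j * (t - s) * (INR (S j) * (1 - t))).
  { apply Rmult_le_compat_l. apply Rmult_le_pos; lra. lra. }
  replace (s ^ S j) with (s * s ^ j) in * by (simpl; ring). nra.
Qed.

Lemma fR_down j s t : INR (S j) / (INR (S j) + 1) <= s -> s <= t <= 1 -> fR (S j) t <= fR (S j) s.
Proof.
  intros Hs Hst. unfold fR. apply Rmult_le_compat_l. apply pos_INR.
  pose proof (pos_INR (S j)).
  assert (Hs0 : 0 <= s) by (pose proof (div_nonneg (INR (S j)) (INR (S j) + 1) H ltac:(lra)); lra).
  pose proof (bern2 j s t ltac:(lra)).
  assert (Hn : INR (S j) * (1 - s) <= s).
  { apply Rmult_le_compat_r with (r := INR (S j) + 1) in Hs; [|lra].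
    unfold Rdiv in Hs. rewrite Rmult_assoc, Rinv_l in Hs by lra. nra. }
  pose proof (pow_le t j ltac:(lra)).
  replace (t ^ S j - t ^ S (S j)) with (t ^ S j * (1 - t)) by (simpl; ring).
  replace (s ^ S j - s ^ S (S j)) with (s ^ S j * (1 - s)) by (simpl; ring).
  assert (A1 : (t ^ S j - INR (S j) * t ^ j * (t - s)) * (1 - s) <= s ^ S j * (1 - s)) by (apply Rmult_le_compat_r; lra).
  assert (A2 : t ^ j * (t - s) * (INR (S j) * (1 - s)) <= t ^ j * (t - s) * t).
  { apply Rmult_le_compat_l. apply Rmult_le_pos; lra. lra. }
  replace (t ^ S j) with (t * t ^ j) in * by (simpl; ring). nra.
Qed.

Lemma var_up (u : nat -> R) B :
  (forall k, 0 <= u k <= B) -> (forall k, u k <= u (S k)) -> forall N, var u N <= 3 * B.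
Proof.
  intros Hb Hup N. unfold var. rewrite (sumR_ext _ (fun k => u (S k) - u k)).
  rewrite sumR_telescope. pose proof (Hb N); pose proof (Hb O); lra.
  intros k _. rewrite Rabs_right; auto. specialize (Hup k); lra.
Qed.

Lemma partb {X : CBanach} (Xs : nat -> X -> Prop) (p : nat -> X -> X) :
  R_Schauder Xs p -> forall T : X -> X, Ritt T -> Ritt_multiplier Xs p T -> R_Ritt T.
Proof.
  intros [Hs [K HK]] T [HbT _] [c [Hc [Hmono Hconv]]].
  assert (HK' : Rbd (PF p) K) by exact HK.
  pose proof HbT as HbT'. destruct HbT' as [[Hadd Hsc] [MT HMT]].
  assert (Tpk : forall k x, T (p k x) = vscal (RtoC (c k)) (p k x)).
  { intros k x. apply (conv_unique _ _ _ (Hconv (p k x))).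
    apply conv_eventually with (S k). intros N HN. apply psum_single with k; auto.
    intros j. rewrite (p_proj _ _ Hs). destruct (Nat.eqb_spec j k). subst; auto. apply vscal_zero_v. }
  assert (powc : forall n x, conv (Emul p (fun k => RtoC (c k ^ n)) x) (Nat.iter n T x)).
  { induction n; intros x.
    - simpl. eapply conv_ext; [| apply (sch_conv _ _ Hs x)]. intros N. unfold Emul.
      apply psum_ext; intros; symmetry; apply rs_1.
    - simpl. eapply conv_ext; [| apply (conv_op T MT _ _ Hadd HMT (IHn x))].
      intros N. unfold Emul. rewrite psum_map by exact Hadd. apply psum_ext; intros k _.
      rewrite Hsc, Tpk, rs_mul. f_equal. f_equal. ring. }
  split; [exact HbT|]. split.
  - apply (mult_Rbound p K 1 1 _ HK'). intros Sop [n Hn]. exists (fun k => RtoC (c k ^ n)). split.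
    + split.
      * intros k. rewrite Cmod_RtoC. specialize (Hc k). rewrite Rabs_right.
        rewrite <- (pow1 n). apply pow_incr; lra. apply Rle_ge, pow_le; lra.
      * intros N. rewrite (sumR_ext _ (fun k => c (S k) ^ n - c k ^ n)).
        rewrite (sumR_telescope (fun k => c k ^ n)). pose proof (Hc N). pose proof (Hc O).
        assert (c N ^ n <= 1) by (rewrite <- (pow1 n); apply pow_incr; lra).
        assert (0 <= c O ^ n) by (apply pow_le; lra). lra.
        intros k _. rewrite Cmod_Cminus_R. rewrite Rabs_right. auto.
        apply Rge_minus, Rle_ge, pow_incr. pose proof (Hc k); pose proof (Hmono k); lra.
    + intros x. rewrite Hn. apply powc.
  - apply (mult_Rbound p K 1 3 _ HK'). intros U [n [Hn1 Hn]].
    exists (fun k => RtoC (fR n (c k))). split.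
    + split.
      * intros k. rewrite Cmod_RtoC. pose proof (fR_bound n (c k) ltac:(pose proof (Hc k); lra)).
        rewrite Rabs_right; lra.
      * intros N. destruct n as [|j]; [lia|].
        rewrite (sumR_ext _ (fun k => Rabs (fR (S j) (c (S k)) - fR (S j) (c k)))) by (intros; apply Cmod_Cminus_R).
        replace 3 with (3 * 1) by ring.
        change (sumR (fun k => Rabs (fR (S j) (c (S k)) - fR (S j) (c k))) N) with (var (fun k => fR (S j) (c k)) N).
        set (t0 := INR (S j) / (INR (S j) + 1)).
        destruct (classic (exists k, c (S k) > t0)) as [Hex|Hnex].
        -- destruct (exists_least _ Hex) as [k1 [Hk1 Hmin]].
           apply (var_unimodal (fun k => fR (S j) (c k)) 1 k1).
           ++ intros k; apply fR_bound; pose proof (Hc k); lra.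
           ++ intros k Hk. apply fR_up. split. pose proof (Hc k); lra. apply Hmono.
              apply Rnot_gt_le, Hmin; auto.
           ++ intros k Hk. apply fR_down. pose proof (mono_le c Hmono (S k1) k Hk). unfold t0 in *. lra.
              split. apply Hmono. pose proof (Hc (S k)); lra.
        -- apply var_up.
           ++ intros k; apply fR_bound; pose proof (Hc k); lra.
           ++ intros k. apply fR_up. split. pose proof (Hc k); lra. apply Hmono.
              apply Rnot_gt_le. intros Hg. apply Hnex. eauto.
    + intros x. rewrite Hn.
      eapply conv_ext; [| apply conv_scal, conv_sub; apply powc].
      intros N. unfold Emul. rewrite <- psum_sub, <- psum_scal. apply psum_ext; intros k _.
      rewrite rs_sub, rs_mul. reflexivity.
Qed.

Lemma sq_eq_pos a b : 0 <= a -> 0 <= b -> a * a = b * b -> a = b.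
Proof. intros; nra. Qed.

Lemma sq_le_pos a b : 0 <= a -> 0 <= b -> a * a <= b * b -> a <= b.
Proof. intros; nra. Qed.

Lemma sector_of th x y : 0 < th < PI -> 0 < x -> y * y < sin th * sin th * (x * x + y * y) -> sector th (x, y).
Proof.
  intros Hth Hx Hy. set (u := y / x). set (q := sqrt (1 + u²)).
  assert (Hq : 0 < q) by (apply sqrt_lt_R0; unfold Rsqr; nra).
  assert (Hqq : q * q = 1 + u * u) by (unfold q; rewrite sqrt_sqrt; unfold Rsqr; nra).
  set (r := sqrt (x * x + y * y)).
  assert (Hr : 0 < r) by (apply sqrt_lt_R0; nra).
  assert (Hrr : r * r = x * x + y * y) by (unfold r; rewrite sqrt_sqrt; nra).
  assert (Hrq : r = x * q).
  { apply sq_eq_pos; try nra. rewrite Hrr.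
    replace (x * q * (x * q)) with (x * x * (q * q)) by ring. rewrite Hqq. unfold u. field. lra. }
  exists r, (atan u). split; [auto|]. split.
  { pose proof (atan_bound u). pose proof PI_RGT_0. lra. }
  split.
  - destruct (Rlt_or_le th (PI / 2)) as [Hlt|Hge].
    + assert (Hc : 0 < cos th) by (apply cos_gt_0; lra).
      assert (Hs : 0 < sin th) by (apply sin_gt_0; lra).
      pose proof (sin2_cos2 th) as H1. unfold Rsqr in H1.
      assert (Hyc : y * cos th * (y * cos th) < sin th * x * (sin th * x)).
      { replace (y * cos th * (y * cos th)) with (y * y * (cos th * cos th)) by ring.
        replace (cos th * cos th) with (1 - sin th * sin th) by lra. nra. }
      assert (Hsx : 0 < sin th * x) by nra.
      assert (A1 : y * cos th < sin th * x).
      { apply Rnot_le_lt; intros Hle. assert (sin th * x * (sin th * x) <= y * cos th * (y * cos th)).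
        apply Rmult_le_compat; lra. lra. }
      assert (A2 : - (sin th * x) < y * cos th).
      { apply Rnot_le_lt; intros Hle. assert (sin th * x * (sin th * x) <= y * cos th * (y * cos th)).
        replace (y * cos th * (y * cos th)) with ((- (y * cos th)) * (- (y * cos th))) by ring.
        apply Rmult_le_compat; lra. lra. }
      assert (Ht : atan (tan th) = th) by (apply atan_tan; lra).
      assert (B1 : u < tan th).
      { unfold u, tan. apply (Rmult_lt_reg_r (x * cos th)). nra.
        replace (y / x * (x * cos th)) with (y * cos th) by (field; lra).
        replace (sin th / cos th * (x * cos th)) with (sin th * x) by (field; lra). auto. }
      assert (B2 : - tan th < u).
      { unfold u, tan. apply (Rmult_lt_reg_r (x * cos th)). nra.
        replace (y / x * (x * cos th)) with (y * cos th) by (field; lra).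
        replace (- (sin th / cos th) * (x * cos th)) with (- (sin th * x)) by (field; lra). auto. }
      apply atan_increasing in B1. apply atan_increasing in B2. rewrite atan_opp, Ht in *.
      apply Rabs_def1; lra.
    + pose proof (atan_bound u). apply Rabs_def1; lra.
  - rewrite cos_atan, sin_atan. fold q. rewrite Hrq. f_equal; unfold u; field; lra.
Qed.

Lemma not_sector_cases th (l : Defs.C) : 0 < th < PI -> ~ sector th l ->
  fst l <= 0 \/ sin th * sin th * (fst l * fst l + snd l * snd l) <= snd l * snd l.
Proof.
  intros Hth Hn. destruct l as [x y]; simpl.
  destruct (Rle_or_lt x 0) as [H|H]; [left; auto| right].
  apply Rnot_lt_le. intros Hc. apply Hn. apply sector_of; auto.
Qed.

Lemma dist_bounds th (l : Defs.C) t : 0 < th < PI -> ~ sector th l -> 0 <= t ->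
  sin th * Cmod l <= Cmod (Cminus l (RtoC t)) /\ sin th * t <= Cmod (Cminus l (RtoC t)).
Proof.
  intros Hth Hn Ht. pose proof (not_sector_cases th l Hth Hn) as Hc.
  assert (Hs : 0 < sin th) by (apply sin_gt_0; lra).
  pose proof (SIN_bound th) as Hs1.
  destruct l as [x y]; simpl in *. unfold Cmod, Cminus, RtoC; simpl.
  replace ((x - t) * ((x - t) * 1) + (y - 0) * ((y - 0) * 1)) with ((x - t) * (x - t) + y * y) by ring.
  replace (x * (x * 1) + y * (y * 1)) with (x * x + y * y) by ring.
  assert (Hxt : 0 <= (x - t) * (x - t)) by (pose proof (Rle_0_sqr (x - t)); unfold Rsqr in *; lra).
  assert (Hyy : 0 <= y * y) by (pose proof (Rle_0_sqr y); unfold Rsqr in *; lra).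
  assert (Hxx : 0 <= x * x) by (pose proof (Rle_0_sqr x); unfold Rsqr in *; lra).
  assert (Hd : 0 <= (x - t) * (x - t) + y * y) by lra.
  assert (Hs2 : sin th * sin th <= 1) by nra.
  assert (D1 : sin th * sin th * (x * x + y * y) <= (x - t) * (x - t) + y * y).
  { destruct Hc as [Hc|Hc]; nra. }
  assert (D2 : sin th * sin th * (t * t) <= (x - t) * (x - t) + y * y).
  { destruct Hc as [Hc|Hc]. nra.
    assert (E : (1 - sin th * sin th) * ((x - t) * (x - t) + y * y - sin th * sin th * (t * t)) =
      ((1 - sin th * sin th) * t - x) * ((1 - sin th * sin th) * t - x) +
      ((1 - sin th * sin th) * (y * y) - sin th * sin th * (x * x))) by ring.
    destruct (Rlt_or_le 0 (1 - sin th * sin th)) as [Hp|Hp].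
    - assert (0 <= (1 - sin th * sin th) * ((x - t) * (x - t) + y * y - sin th * sin th * (t * t))).
      { rewrite E. apply Rplus_le_le_0_compat.
        pose proof (Rle_0_sqr ((1 - sin th * sin th) * t - x)); unfold Rsqr in *; lra.
        lra. }
      assert (0 <= (x - t) * (x - t) + y * y - sin th * sin th * (t * t)).
      { apply (Rmult_le_reg_l (1 - sin th * sin th)); lra. }
      lra.
    - assert (sin th * sin th = 1) by nra. rewrite H in *. assert (x * x <= 0) by nra. nra. }
  split.
  - apply sq_le_pos. apply Rmult_le_pos; [lra| apply sqrt_pos]. apply sqrt_pos.
    replace (sin th * sqrt (x * x + y * y) * (sin th * sqrt (x * x + y * y))) with
      (sin th * sin th * (sqrt (x * x + y * y) * sqrt (x * x + y * y))) by ring.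
    rewrite !sqrt_sqrt by nra. auto.
  - apply sq_le_pos. nra. apply sqrt_pos. rewrite sqrt_sqrt by nra. nra.
Qed.

Import Complex.
Import Defs.

Lemma inv_diff (u v : Defs.C) : u <> RtoC 0 -> v <> RtoC 0 ->
  Cminus (Complex.Cinv v) (Complex.Cinv u) = Cmul (Cminus u v) (Complex.Cinv (Cmul u v)).
Proof.
  intros Hu Hv.
  assert (H : Complex.Cminus (Complex.Cinv v) (Complex.Cinv u) =
    Complex.Cmult (Complex.Cminus u v) (Complex.Cinv (Complex.Cmult u v))).
  { field. split; auto. }
  exact H.
Qed.

Lemma Cmod_mul (a b : Defs.C) : Cmod (Cmul a b) = Cmod a * Cmod b.
Proof. exact (Complex.Cmod_mult a b). Qed.

Lemma Cmod_Cinv (a : Defs.C) : a <> RtoC 0 -> Cmod (Complex.Cinv a) = / Cmod a.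
Proof. intros H. exact (Complex.Cmod_inv a H). Qed.

Lemma ne0_of_Cmod (a : Defs.C) : 0 < Cmod a -> a <> RtoC 0.
Proof. intros H E. rewrite E, Cmod_RtoC, Rabs_R0 in H. lra. Qed.

Lemma mul_inv_1 (a : Defs.C) : a <> RtoC 0 -> Cmul a (Complex.Cinv a) = RtoC 1.
Proof.
  intros H. assert (E : Complex.Cmult a (Complex.Cinv a) = Complex.RtoC 1). { field; auto. } exact E.
Qed.

Lemma Cminus_RtoC_RtoC (l : Defs.C) a b : Cminus (Cminus l (RtoC a)) (Cminus l (RtoC b)) = RtoC (b - a).
Proof. destruct l; unfold Cminus, RtoC; simpl; f_equal; ring. Qed.

Definition nres (l : Defs.C) (a : nat -> R) k := Complex.Cinv (Cminus l (RtoC (a k))).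
Definition mres (l : Defs.C) (a : nat -> R) k := Cmul l (nres l a k).
Definition ares (l : Defs.C) (a : nat -> R) k := Cmul (RtoC (a k)) (nres l a k).

Lemma var_tele (m : nat -> Defs.C) (h : nat -> R) N :
  (forall k, Cmod (Cminus (m (S k)) (m k)) <= h k - h (S k)) ->
  sumR (fun k => Cmod (Cminus (m (S k)) (m k))) N <= h O - h N.
Proof.
  intros H. eapply Rle_trans. apply sumR_le. apply H.
  rewrite (sumR_ext _ (fun k => - (h (S k) - h k))) by (intros; ring).
  rewrite (sumR_ext _ (fun k => -1 * (h (S k) - h k))) by (intros; ring).
  rewrite sumR_scal, (sumR_telescope h). lra.
Qed.


Lemma res_bounds th (l : Defs.C) (a : nat -> R) :
  0 < th < PI -> ~ sector th l -> (forall k, 0 < a k) -> (forall k, a k <= a (S k)) ->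
  bv (nres l a) (/ (sin th * a O)) (/ (sin th * sin th * a O)) /\
  bv (mres l a) (/ sin th) (4 / (sin th * sin th)) /\
  bv (ares l a) (/ sin th + 1) (4 / (sin th * sin th)).
Proof.
  intros Hth Hn Ha Hm. set (s := sin th).
  assert (Hs : 0 < s) by (apply sin_gt_0; lra).
  set (d := fun k => Cmod (Cminus l (RtoC (a k)))).
  assert (Hd1 : forall k, s * Cmod l <= d k) by (intros; apply (dist_bounds th l (a k) Hth Hn); left; auto).
  assert (Hd2 : forall k, s * a k <= d k) by (intros; apply (dist_bounds th l (a k) Hth Hn); left; auto).
  assert (Hdp : forall k, 0 < d k) by (intros k; specialize (Hd2 k); specialize (Ha k); nra).
  assert (Hne : forall k, Cminus l (RtoC (a k)) <> RtoC 0) by (intros; apply ne0_of_Cmod, Hdp).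
  assert (Hmono : forall k j, (k <= j)%nat -> a k <= a j) by (apply mono_le; auto).
  assert (HL : 0 <= Cmod l) by apply Cmod_nonneg.
  assert (Hnres : forall k, Cmod (nres l a k) = / d k) by (intros; unfold nres; rewrite Cmod_Cinv; auto).
  assert (Hdiff : forall k, Cmod (Cminus (nres l a (S k)) (nres l a k)) = (a (S k) - a k) / (d k * d (S k))).
  { intros k. unfold nres. rewrite inv_diff by auto. rewrite Cmod_mul, Cminus_RtoC_RtoC, Cmod_RtoC, Cmod_Cinv.
    rewrite Cmod_mul. rewrite Rabs_right by (specialize (Hm k); lra). unfold d; field.
    split; apply Rgt_not_eq, Hdp.
    intros E. apply (f_equal Cmod) in E. rewrite Cmod_mul, Cmod_RtoC, Rabs_R0 in E.
    pose proof (Hdp k); pose proof (Hdp (S k)). unfold d in *. nra. }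
  assert (Hdd : forall k, s * s * (a k * a (S k)) <= d k * d (S k)).
  { intros k. pose proof (Hd2 k); pose proof (Hd2 (S k)); pose proof (Ha k); pose proof (Ha (S k)).
    replace (s * s * (a k * a (S k))) with ((s * a k) * (s * a (S k))) by ring.
    apply Rmult_le_compat; nra. }
  assert (Hdd2 : forall k, s * s * ((Cmod l + a k) * (Cmod l + a (S k))) <= 4 * (d k * d (S k))).
  { intros k. pose proof (Hd1 k); pose proof (Hd1 (S k)); pose proof (Hd2 k); pose proof (Hd2 (S k)); pose proof (Ha k); pose proof (Ha (S k)).
    assert (s * (Cmod l + a k) <= 2 * d k) by lra. assert (s * (Cmod l + a (S k)) <= 2 * d (S k)) by lra.
    replace (s * s * ((Cmod l + a k) * (Cmod l + a (S k)))) with ((s * (Cmod l + a k)) * (s * (Cmod l + a (S k)))) by ring.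
    replace (4 * (d k * d (S k))) with ((2 * d k) * (2 * d (S k))) by ring.
    apply Rmult_le_compat; nra. }
  assert (HmD : forall k, Cmod (Cminus (mres l a (S k)) (mres l a k)) = Cmod l * ((a (S k) - a k) / (d k * d (S k)))).
  { intros k. unfold mres. rewrite <- Hdiff, <- Cmod_mul. f_equal. destruct l, (nres _ _ (S k)), (nres _ _ k).
    unfold Cminus, Cmul; simpl; f_equal; ring. }
  assert (HmV : forall N, sumR (fun k => Cmod (Cminus (mres l a (S k)) (mres l a k))) N <= 4 / (s * s)).
  { intros N. eapply Rle_trans. apply (var_tele _ (fun k => 4 / (s * s) * (Cmod l / (Cmod l + a k)))).
    - intros k. rewrite HmD. pose proof (Ha k); pose proof (Ha (S k)). pose proof (Hm k).
      pose proof (Hdp k); pose proof (Hdp (S k)). pose proof (Hdd2 k).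
      replace (4 / (s * s) * (Cmod l / (Cmod l + a k)) - 4 / (s * s) * (Cmod l / (Cmod l + a (S k))))
        with (Cmod l * (a (S k) - a k) * / (s * s * ((Cmod l + a k) * (Cmod l + a (S k)) / 4))) by (field; lra).
      unfold Rdiv. rewrite <- Rmult_assoc. apply Rmult_le_compat_l. nra.
      apply Rinv_le_contravar. apply Rmult_lt_0_compat; [nra| apply Rdiv_lt_0_compat; nra]. lra.
    - pose proof (Ha N); pose proof (Ha O).
      assert (0 <= Cmod l / (Cmod l + a N)) by (apply div_nonneg; lra).
      assert (Cmod l / (Cmod l + a O) <= 1) by (apply div_le1; lra).
      assert (0 < 4 / (s * s)) by (apply Rdiv_lt_0_compat; nra).
      assert (4 / (s * s) * (Cmod l / (Cmod l + a N)) >= 0) by nra. nra. }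
  assert (Hmb : forall k, Cmod (mres l a k) <= / s).
  { intros k. unfold mres. rewrite Cmod_mul, Hnres. pose proof (Hd1 k); pose proof (Hdp k).
    replace (Cmod l * / d k) with ((s * Cmod l) / (s * d k)) by (field; lra).
    apply Rle_trans with (d k / (s * d k)). apply Rmult_le_compat_r. left; apply Rinv_0_lt_compat; nra. auto.
    right; field; lra. }
  assert (Hares : forall k, ares l a k = Cminus (mres l a k) (RtoC 1)).
  { intros k. unfold ares, mres. pose proof (mul_inv_1 _ (Hne k)) as E. unfold nres in *.
    revert E. generalize (Complex.Cinv (Cminus l (RtoC (a k)))). intros c E.
    destruct l, c. unfold Cmul, Cminus, RtoC in *; simpl in *. injection E; intros E1 E2.
    f_equal; nra. }
  split; [|split].
  - split.
    + intros k. rewrite Hnres. pose proof (Hd2 k); pose proof (Hmono O k ltac:(lia)); pose proof (Ha O).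
      apply Rinv_le_contravar. nra. nra.
    + intros N. eapply Rle_trans. apply (var_tele _ (fun k => / (s * s * a k))).
      * intros k. rewrite Hdiff. pose proof (Ha k); pose proof (Ha (S k)). pose proof (Hm k).
        replace (/ (s * s * a k) - / (s * s * a (S k))) with ((a (S k) - a k) / (s * s * (a k * a (S k)))) by (field; nra).
        unfold Rdiv. apply Rmult_le_compat_l. lra. apply Rinv_le_contravar. repeat apply Rmult_lt_0_compat; auto. apply Hdd.
      * pose proof (Ha N). assert (0 <= / (s * s * a N)) by (left; apply Rinv_0_lt_compat; repeat apply Rmult_lt_0_compat; auto).
        replace (/ (s * sin th * a O)) with (/ (s * s * a O)) by reflexivity. lra.
  - split; auto.
  - split.
    + intros k. rewrite Hares. eapply Rle_trans. apply (Complex.Cmod_triangle (mres l a k) (Complex.Copp (RtoC 1))).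
      pose proof (Hmb k). assert (Complex.Cmod (Complex.Copp (RtoC 1)) = 1).
      { rewrite Complex.Cmod_opp. change (Cmod (RtoC 1) = 1). rewrite Cmod_RtoC, Rabs_R1; auto. }
      change (Complex.Cmod (mres l a k)) with (Cmod (mres l a k)). lra.
    + intros N. eapply Rle_trans; [| apply (HmV N)]. right. apply sumR_ext; intros k _.
      rewrite !Hares. f_equal. destruct (mres l a (S k)), (mres l a k). unfold Cminus, RtoC; simpl; f_equal; ring.
Qed.

Definition Mop {X : CBanach} (p : nat -> X -> X) (m : nat -> Defs.C) (x : X) : X :=
  epsilon (inhabits vzero) (fun l => conv (Emul p m x) l).

Lemma Mop_conv {X : CBanach} Xs (p : nat -> X -> X) K m M V : Schauder Xs p -> Rbd (PF p) K -> bv m M V ->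
  forall x, conv (Emul p m x) (Mop p m x).
Proof. intros Hs HK Hbv x. unfold Mop. apply epsilon_spec. eapply mult_exists; eauto. Qed.

Lemma Emul_add {X : CBanach} Xs (p : nat -> X -> X) : Schauder Xs p ->
  forall m x y N, Emul p m (vadd x y) N = vadd (Emul p m x N) (Emul p m y N).
Proof.
  intros Hs m x y N. unfold Emul. rewrite <- psum_add. apply psum_ext; intros k _.
  rewrite (p_add _ _ Hs), vscal_distr_v; auto.
Qed.

Lemma Emul_scal {X : CBanach} Xs (p : nat -> X -> X) : Schauder Xs p ->
  forall m c x N, Emul p m (vscal c x) N = vscal c (Emul p m x N).
Proof.
  intros Hs m c x N. unfold Emul. rewrite <- psum_scal. apply psum_ext; intros k _.
  rewrite (p_scal _ _ Hs), vscal_comm; auto.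
Qed.

Lemma vsub_scal_r {X : CBanach} u w (v : X) : vsub (vscal u v) (vscal w v) = vscal (Cminus u w) v.
Proof.
  unfold vsub. rewrite <- vscal_m1, vscal_assoc, <- vscal_distr_s. apply vscal_eqC. ceq.
Qed.

Lemma not_csector th l : ~ csector th l -> ~ sector th l.
Proof.
  intros Hn Hs. apply Hn. intros eps Heps. exists l. split; auto.
  destruct l as [x y]. unfold Cmod, Cminus; simpl.
  replace ((x - x) * ((x - x) * 1) + (y - y) * ((y - y) * 1)) with 0 by ring. rewrite sqrt_0. auto.
Qed.

Lemma Rb_bounded {X : CBanach} (F : (X -> X) -> Prop) : R_bounded F -> bounded_set F.
Proof.
  intros [K HK]. exists K. intros S HS x. pose proof (HK [(S, x)]). simpl in H. rewrite !rad_single in H.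
  apply H. intros q [<-|[]]; auto.
Qed.

Lemma res_ne th (l : Defs.C) (a : nat -> R) : 0 < th < PI -> ~ sector th l -> (forall k, 0 < a k) ->
  forall k, Cminus l (RtoC (a k)) <> RtoC 0.
Proof.
  intros Hth Hn Ha k. apply ne0_of_Cmod. pose proof (dist_bounds th l (a k) Hth Hn (Rlt_le _ _ (Ha k))) as [_ H].
  pose proof (sin_gt_0 th ltac:(lra) ltac:(lra)). pose proof (Ha k). nra.
Qed.

Lemma nres_inv (l : Defs.C) (a : nat -> R) k : Cminus l (RtoC (a k)) <> RtoC 0 ->
  Cmul (nres l a k) (Cminus l (RtoC (a k))) = RtoC 1.
Proof.
  intros H. rewrite <- (mul_inv_1 _ H). unfold nres.
  generalize (Complex.Cinv (Cminus l (RtoC (a k)))) as c. generalize (Cminus l (RtoC (a k))) as u.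
  intros [u1 u2] [c1 c2]. unfold Cmul; simpl; f_equal; ring.
Qed.

Lemma mres_ares (l : Defs.C) (a : nat -> R) k : Cminus l (RtoC (a k)) <> RtoC 0 ->
  Cminus (mres l a k) (ares l a k) = RtoC 1.
Proof.
  intros H. rewrite <- (nres_inv l a k H). unfold mres, ares. generalize (nres l a k) as c. destruct l as [l1 l2]. intros [c1 c2].
  unfold Cmul, Cminus, RtoC; simpl; f_equal; ring.
Qed.

Lemma res_claim {X : CBanach} Xs (p : nat -> X -> X) K DA A (a : nat -> R) th l :
  Schauder Xs p -> Rbd (PF p) K ->
  (forall n, 0 < a n) -> (forall n, a n <= a (S n)) ->
  (forall x, DA x <-> exists l, conv (psum (fun n => vscal (RtoC (a n)) (p n x))) l) ->
  (forall x, DA x -> conv (psum (fun n => vscal (RtoC (a n)) (p n x))) (A x)) ->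
  0 < th < PI -> ~ sector th l ->
  resolvent_op DA A l (Mop p (nres l a)) /\
  (forall R, resolvent_op DA A l R -> forall x, R x = Mop p (nres l a) x).
Proof.
  intros Hs HK Ha Hmono HDA HA Hth Hns.
  destruct (res_bounds th l a Hth Hns Ha Hmono) as [Hbn [Hbm Hba]].
  pose proof (res_ne th l a Hth Hns Ha) as Hne.
  set (R0 := Mop p (nres l a)).
  assert (HR0 : forall x, conv (Emul p (nres l a) x) (R0 x)) by (intros; eapply Mop_conv; eauto).
  assert (HAR : forall x, conv (Emul p (ares l a) x) (Mop p (ares l a) x)) by (intros; eapply Mop_conv; eauto).
  assert (HpA : forall z, DA z -> forall k, p k (A z) = vscal (RtoC (a k)) (p k z)).
  { intros z Hz k. apply (mult_p _ _ Hs (fun n => RtoC (a n)) z (A z)). apply HA; auto. }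
  assert (Hiii : forall z, DA z -> R0 (vsub (vscal l z) (A z)) = z).
  { intros z Hz. apply (conv_unique _ _ _ (HR0 _)).
    eapply conv_ext; [| apply (sch_conv _ _ Hs z)]. intros N. unfold Emul. apply psum_ext; intros k _.
    rewrite (p_sub _ _ Hs), (p_scal _ _ Hs), HpA by auto. rewrite vsub_scal_r, vscal_assoc.
    rewrite nres_inv by auto. rewrite rs_1; reflexivity. }
  split; [split; [|split]|].
  - split. split.
    + intros x y. apply (conv_unique _ _ _ (HR0 _)).
      eapply conv_ext; [| apply conv_add; apply HR0]. intros N. symmetry; apply (Emul_add _ _ Hs).
    + intros c x. apply (conv_unique _ _ _ (HR0 _)).
      eapply conv_ext; [| apply conv_scal; apply HR0]. intros N. symmetry; apply (Emul_scal _ _ Hs).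
    + exists (2 * (/ (sin th * a O) + / (sin th * sin th * a O)) * K). intros x.
      apply (conv_le _ _ _ (HR0 x)). intros N. eapply Emul_norm; eauto.
  - intros x. set (y := R0 x).
    assert (Hpy : forall k, p k y = vscal (nres l a k) (p k x)) by (apply (mult_p _ _ Hs), HR0).
    assert (Hc : conv (psum (fun n => vscal (RtoC (a n)) (p n y))) (Mop p (ares l a) x)).
    { eapply conv_ext; [| apply HAR]. intros N. unfold Emul. apply psum_ext; intros k _.
      rewrite Hpy, vscal_assoc; auto. }
    assert (HDy : DA y) by (apply HDA; eauto).
    split; auto.
    assert (HAy : A y = Mop p (ares l a) x) by (apply (conv_unique _ _ _ (HA y HDy) Hc)).
    rewrite HAy. apply (conv_unique (fun N => vsub (vscal l (Emul p (nres l a) x N)) (Emul p (ares l a) x N))).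
    + apply conv_sub; [apply conv_scal, HR0| apply HAR].
    + eapply conv_ext; [| apply (sch_conv _ _ Hs x)]. intros N. unfold Emul.
      rewrite <- psum_scal, <- psum_sub. apply psum_ext; intros k _.
      rewrite vscal_assoc, vsub_scal_r. change (Cmul l (nres l a k)) with (mres l a k).
      rewrite mres_ares by auto. rewrite rs_1; reflexivity.
  - intros z Hz. apply Hiii; auto.
  - intros R [_ [HR _]] x. destruct (HR x) as [HD HE].
    rewrite <- HE at 2. rewrite Hiii; auto.
Qed.

Lemma parta {X : CBanach} (Xs : nat -> X -> Prop) (p : nat -> X -> X) :
  R_Schauder Xs p ->
  forall (DA : X -> Prop) (A : X -> X),
      (exists w, 0 < w < PI /\ sectorial w DA A) ->
      sect_multiplier Xs p DA A ->
      R_sectorial_type0 DA A.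
Proof.
  intros [Hs [K HK]] DA A [w [Hw [Hcdd _]]] [a [Ha [Hmono [HDA HA]]]].
  assert (HK' : Rbd (PF p) K) by exact HK.
  assert (Rsect : forall th, 0 < th < PI -> R_bounded (sect_res_set DA A th)).
  { intros th Hth. apply (mult_Rbound p K (/ sin th) (4 / (sin th * sin th)) _ HK').
    intros S [l [R [Hnc [HR HS]]]].
    pose proof (not_csector _ _ Hnc) as Hns.
    destruct (res_bounds th l a Hth Hns Ha Hmono) as [Hbn [Hbm Hba]].
    exists (mres l a). split; auto. intros x.
    destruct (res_claim Xs p K DA A a th l Hs HK' Ha Hmono HDA HA Hth Hns) as [_ Huniq].
    rewrite HS, (Huniq R HR). eapply conv_ext; [| apply conv_scal; eapply Mop_conv; eauto].
    intros N. unfold Emul. rewrite <- psum_scal. apply psum_ext; intros k _. rewrite vscal_assoc; auto. }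
  intros w' Hw'. split.
  - split; [exact Hcdd|]. split.
    + intros l Hl. exists (Mop p (nres l a)).
      apply (res_claim Xs p K DA A a w' l Hs HK' Ha Hmono HDA HA Hw' (not_csector _ _ Hl)).
    + intros th Hth. apply Rb_bounded, Rsect. lra.
  - intros th Hth. apply Rsect. lra.
Qed.

Theorem lemma2 (X : CBanach) (Xs : nat -> X -> Prop) (p : nat -> X -> X) :
  R_Schauder Xs p ->
  (forall (DA : X -> Prop) (A : X -> X),
      (exists w, 0 < w < PI /\ sectorial w DA A) ->
      sect_multiplier Xs p DA A ->
      R_sectorial_type0 DA A) /\
  (forall T : X -> X,
      Ritt T -> Ritt_multiplier Xs p T -> R_Ritt T).
Proof.
  intros HR. split.
  - apply parta; auto.
  - apply partb; auto.
Qed.
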